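(* Let $B>0$ and $0<C<\sqrt{2}\,B$. On $\ell^2(\mathbb{N}_0)$ with standard orthonormal basis $(e_k)_{k\ge 0}$, let $H$ be the bounded self-adjoint Jacobi operator with zero diagonal and off-diagonal entries $(C,B,B,\dots)$, i.e. $$H e_0=C e_1,\qquad H e_1=C e_0+B e_2,\qquad H e_k=B e_{k-1}+B e_{k+1}\ (k\ge 2).$$ Let $P=\sum_{k=0}^{\infty}\big(e_{2k}e_{2k}^\dagger-e_{2k+1}e_{2k+1}^\dagger\big)$, i.e. $Pe_k=(-1)^k e_k$. Fix a finite index $j\ge 0$ and let $\psi(t)=e^{-iHt}e_j$. Then $$\lim_{t\to+\infty}\langle P(t)\rangle=\lim_{t\to+\infty}\langle\psi(t),P\psi(t)\rangle=0 .$$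
   Context: Units with $\hbar=1$; $\langle P(t)\rangle$ is the expectation value of the parity-like operator $P$ (the ''even-odd difference'') in the time-evolved state $e^{-iHt}e_j$. *)

(* Defs.v *)
From Stdlib Require Import Reals Lra Lia Arith.
From Coquelicot Require Import Coquelicot.
Open Scope R_scope.

(* Off-diagonal entries of the Jacobi matrix: a_0 = C, a_k = B (k >= 1),
   with H_{k,k+1} = H_{k+1,k} = a_k and zero diagonal. *)
Definition offdiag (B C : R) (k : nat) : R :=
  match k with O => C | S _ => B end.

Definition applyH (B C : R) (v : nat -> R) (k : nat) : R :=
  match k with
  | O => offdiag B C 0 * v 1%nat
  | S k' => offdiag B C k' * v k' + offdiag B C k * v (S k)
  end.

Definition basis_vec (j : nat) (k : nat) : R := if Nat.eqb k j then 1 else 0.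

Fixpoint Hpow_e (B C : R) (j : nat) (n : nat) : nat -> R :=
  match n with
  | O => basis_vec j
  | S n' => applyH B C (Hpow_e B C j n')
  end.

(* psi(t) = e^{-iHt} e_j = sum_n (-i t)^n / n! H^n e_j  (H bounded, so the
   exponential series converges in norm, hence coordinatewise).
   Real part: cos(Ht) e_j; imaginary part: -sin(Ht) e_j. *)
Definition psi_re (B C : R) (j : nat) (t : R) (k : nat) : R :=
  Series (fun m => (-1) ^ m * t ^ (2 * m) / INR (fact (2 * m))
                   * Hpow_e B C j (2 * m) k).

Definition psi_im (B C : R) (j : nat) (t : R) (k : nat) : R :=
  - Series (fun m => (-1) ^ m * t ^ (2 * m + 1) / INR (fact (2 * m + 1))
                     * Hpow_e B C j (2 * m + 1) k).

Definition parity_expect (B C : R) (j : nat) (t : R) : R :=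
  Series (fun k => (-1) ^ k *
            (psi_re B C j t k ^ 2 + psi_im B C j t k ^ 2)).

(* Main.v *)
Require Import Defs.
From Stdlib Require Import Reals Lra Lia Arith Factorial FunctionalExtensionality.
From Coquelicot Require Import Coquelicot.
Open Scope R_scope.
Ltac toR := match goal with |- @eq _ ?a ?b => change (@eq R a b) end.

Lemma ssum_plus (u v : nat -> R) n : sum_n (fun k => u k + v k) n = sum_n u n + sum_n v n.
Proof. induction n. rewrite !sum_O; auto. rewrite !sum_Sn, IHn. unfold plus; simpl; ring. Qed.
Lemma ssum_minus (u v : nat -> R) n : sum_n (fun k => u k - v k) n = sum_n u n - sum_n v n.
Proof. induction n. rewrite !sum_O; auto. rewrite !sum_Sn, IHn. unfold plus; simpl; ring. Qed.
Lemma ssum_scal (c : R) (u : nat -> R) n : sum_n (fun k => c * u k) n = c * sum_n u n.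
Proof. induction n. rewrite !sum_O; auto. rewrite !sum_Sn, IHn. unfold plus; simpl; ring. Qed.
Lemma ssum_ext (u v : nat -> R) n : (forall k, (k <= n)%nat -> u k = v k) -> sum_n u n = sum_n v n.
Proof. apply sum_n_ext_loc. Qed.
Lemma ssum_zero (u : nat -> R) n : (forall k, (k <= n)%nat -> u k = 0) -> sum_n u n = 0.
Proof. intros H. induction n. rewrite sum_O; auto. rewrite sum_Sn, IHn, H; auto. unfold plus; simpl; ring. Qed.
Lemma ssum_delta (f : nat -> R) j n : (j <= n)%nat ->
  sum_n (fun k => if Nat.eqb k j then f k else 0) n = f j.
Proof.
  induction n; intros Hj.
  - rewrite sum_O. assert (j = 0%nat) by lia. subst. reflexivity.
  - rewrite sum_Sn. destruct (Nat.eq_dec j (S n)) as [->|Hne].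
    + rewrite ssum_zero. rewrite Nat.eqb_refl. unfold plus; simpl; ring.
      intros k Hk. destruct (Nat.eqb_spec k (S n)); [lia|auto].
    + rewrite IHn by lia. destruct (Nat.eqb_spec (S n) j); [lia|]. unfold plus; simpl; ring.
Qed.
Lemma ssum_swap (f : nat -> nat -> R) n m :
  sum_n (fun a => sum_n (fun b => f a b) m) n = sum_n (fun b => sum_n (fun a => f a b) n) m.
Proof.
  induction n.
  - rewrite sum_O. apply ssum_ext. intros; rewrite sum_O; auto.
  - rewrite sum_Sn, IHn. change (plus ?x ?y) with (x + y).
    rewrite <- ssum_plus. apply ssum_ext. intros. rewrite sum_Sn. reflexivity.
Qed.

Fixpoint pol (B C : R) (n : nat) (x : R) : R :=
  match n with
  | O => 1
  | S O => x / C
  | S ((S m) as n') => (x * pol B C n' x - offdiag B C m * pol B C m x) / B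
  end.

Definition q (B C : R) (k : nat) (t : R) : R := sin t * pol B C k (2 * B * cos t).

Lemma applyH_scal B C (c : R) (v : nat -> R) k :
  applyH B C (fun m => c * v m) k = c * applyH B C v k.
Proof. destruct k; simpl; ring. Qed.

Lemma pol_rec B C x k : B <> 0 -> C <> 0 ->
  applyH B C (fun m => pol B C m x) k = x * pol B C k x.
Proof.
  intros HB HC. destruct k as [|k].
  - simpl. field. auto.
  - change (applyH B C (fun m => pol B C m x) (S k)) with
      (offdiag B C k * pol B C k x + offdiag B C (S k) * pol B C (S (S k)) x).
    change (pol B C (S (S k)) x) with
      ((x * pol B C (S k) x - offdiag B C k * pol B C k x) / B).
    simpl offdiag at 2. field. auto.
Qed.

Lemma q_rec B C t k : B <> 0 -> C <> 0 ->
  applyH B C (fun m => q B C m t) k = 2 * B * cos t * q B C k t.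
Proof.
  intros HB HC. unfold q. rewrite applyH_scal, pol_rec by auto. ring.
Qed.

Lemma h_supp B C j n k : (j + n < k)%nat -> Hpow_e B C j n k = 0.
Proof.
  revert k. induction n; intros k Hk.
  - simpl. unfold basis_vec. destruct (Nat.eqb_spec k j); [lia|auto].
  - simpl. destruct k as [|k]; [lia|].
    simpl applyH. rewrite !IHn by lia. ring.
Qed.

Lemma h_par B C j n k : Nat.even (j + n + k) = false -> Hpow_e B C j n k = 0.
Proof.
  revert k. induction n; intros k Hk.
  - simpl. unfold basis_vec. destruct (Nat.eqb_spec k j); auto.
    rewrite e in Hk. replace (j + 0 + j)%nat with (2 * j)%nat in Hk by lia.
    rewrite Nat.even_mul in Hk. discriminate.
  - simpl. destruct k as [|k].
    + simpl applyH. rewrite IHn. ring. rewrite <- Hk. f_equal. lia.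
    + simpl applyH. rewrite !IHn. ring.
      all: rewrite <- Hk; first [ replace (j + S n + S k)%nat with (S (S (j+n+k))) by lia; reflexivity | f_equal; lia ].
Qed.

Lemma h_bound B C j n k : 0 < B -> 0 < C ->
  Rabs (Hpow_e B C j n k) <= (3 * (B + C)) ^ n * 2 ^ j * (/ 2) ^ k.
Proof.
  intros HB HC. revert k. induction n; intros k.
  - simpl. unfold basis_vec. destruct (Nat.eqb_spec k j).
    + subst. assert (E: 2^j * (/2)^j = 1) by (rewrite <- Rpow_mult_distr; replace (2 * /2) with 1 by field; apply pow1).
      rewrite Rabs_R1. rewrite Rmult_assoc, E. lra.
    + rewrite Rabs_R0. apply Rmult_le_pos. apply Rmult_le_pos. lra.
      apply pow_le; lra. apply pow_le; lra.
  - simpl Hpow_e. set (D := 3 * (B + C)). set (P := D ^ n * 2 ^ j).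
    assert (HP : 0 <= P) by (unfold P, D; apply Rmult_le_pos; apply pow_le; lra).
    destruct k as [|k].
    + simpl applyH. specialize (IHn 1%nat). fold D P in IHn.
      rewrite Rabs_mult, Rabs_pos_eq by lra. simpl pow in *.
      replace (D * D ^ n * 2 ^ j * 1) with (D * P) by (unfold P; ring).
      apply Rle_trans with (C * (P * (/2 * 1))). apply Rmult_le_compat_l; lra.
      unfold D. nra.
    + change (applyH B C (Hpow_e B C j n) (S k)) with
        (offdiag B C k * Hpow_e B C j n k + B * Hpow_e B C j n (S (S k))).
      pose proof (IHn k) as H1. pose proof (IHn (S (S k))) as H2. fold D P in H1, H2.
      assert (Ha : 0 < offdiag B C k /\ offdiag B C k <= B + C) by (destruct k; simpl; lra).
      set (Q := (/2) ^ k). assert (HQ : 0 <= Q) by (unfold Q; apply pow_le; lra).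
      simpl pow in *. fold Q in H1, H2 |- *.
      eapply Rle_trans. apply Rabs_triang. rewrite !Rabs_mult, (Rabs_pos_eq B), (Rabs_pos_eq (offdiag B C k)) by lra.
      apply Rle_trans with ((B + C) * (P * Q) + B * (P * (/2 * (/2 * Q)))).
      { apply Rplus_le_compat. apply Rle_trans with (offdiag B C k * (P * Q)).
        apply Rmult_le_compat_l; lra. apply Rmult_le_compat_r. apply Rmult_le_pos; lra. lra.
        apply Rmult_le_compat_l; lra. }
      replace (D * D ^ n * 2 ^ j * (/ 2 * Q)) with (D * P * (/2 * Q)) by (unfold P; ring).
      unfold D. assert (0 <= P * Q) by (apply Rmult_le_pos; lra). nra.
Qed.

Lemma green B C (v w : nat -> R) K :
  sum_n (fun k => applyH B C v k * w k - v k * applyH B C w k) K =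
  offdiag B C K * (v (S K) * w K - v K * w (S K)).
Proof.
  induction K.
  - rewrite sum_O. simpl. ring.
  - rewrite sum_Sn, IHK. unfold plus; simpl. ring.
Qed.

Lemma pointwise B C j n K t : B <> 0 -> C <> 0 -> (j + n <= K)%nat ->
  sum_n (fun k => Hpow_e B C j n k * q B C k t) K = (2 * B * cos t) ^ n * q B C j t.
Proof.
  intros HB HC. revert K. induction n; intros K HK.
  - simpl. rewrite <- (ssum_delta (fun k => q B C k t) j K) by lia.
    rewrite Rmult_1_l. apply ssum_ext. intros k _. unfold basis_vec. destruct (k =? j); ring.
  - simpl Hpow_e.
    pose proof (green B C (Hpow_e B C j n) (fun m => q B C m t) K) as G.
    rewrite ssum_minus in G.
    rewrite (h_supp B C j n (S K)), (h_supp B C j n K) in G by lia.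
    assert (E : sum_n (fun k => Hpow_e B C j n k * applyH B C (fun m => q B C m t) k) K
               = 2 * B * cos t * sum_n (fun k => Hpow_e B C j n k * q B C k t) K).
    { rewrite <- ssum_scal. apply ssum_ext. intros. rewrite q_rec by auto. ring. }
    rewrite E, IHn in G by lia. simpl pow. lra.
Qed.

Lemma dcont (f : R -> R) x : ex_derive f x -> continuous f x.
Proof. apply (ex_derive_continuous (K:=R_AbsRing) (V:=R_NormedModule)). Qed.

Lemma exRc (f : R -> R) a b : (forall z, Rmin a b <= z <= Rmax a b -> continuous f z) -> ex_RInt f a b.
Proof. apply (ex_RInt_continuous (V:=R_CompleteNormedModule)). Qed.

Lemma RIu (f : R -> R) a b l : is_RInt f a b l -> RInt f a b = l.
Proof. apply (is_RInt_unique (V:=R_CompleteNormedModule)). Qed.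
Lemma RIc (f : R -> R) a b : ex_RInt f a b -> is_RInt f a b (RInt f a b).
Proof. apply (RInt_correct (V:=R_CompleteNormedModule)). Qed.

Lemma isR_eq (f : R -> R) a b l l' : is_RInt f a b l -> l = l' -> is_RInt f a b l'.
Proof. intros H <-; auto. Qed.

Lemma RIe (f g : R -> R) a b : (forall x, Rmin a b < x < Rmax a b -> f x = g x) -> RInt f a b = RInt g a b.
Proof. apply (RInt_ext (V:=R_CompleteNormedModule)). Qed.

Definition den (r t : R) : R := 1 - 2 * r * cos (2 * t) + r ^ 2.
Definition Kf (r : R) (k : nat) (t : R) : R := cos (INR k * t) / den r t.
Definition KI (r : R) (k : nat) : R := RInt (Kf r k) 0 PI.

Lemma den_pos r t : Rabs r < 1 -> (1 - Rabs r) ^ 2 <= den r t.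
Proof.
  intros Hr. unfold den.
  assert (H1 : r * cos (2 * t) <= Rabs r).
  { apply Rle_trans with (Rabs (r * cos (2*t))). apply Rle_abs.
    rewrite Rabs_mult. pose proof (COS_bound (2*t)). assert (Rabs (cos (2*t)) <= 1) by (apply Rabs_le; lra).
    pose proof (Rabs_pos r). nra. }
  replace ((1 - Rabs r)^2) with (1 - 2 * Rabs r + r^2).
  lra. rewrite <- (pow2_abs r). ring.
Qed.

Lemma den_gt0 r t : Rabs r < 1 -> 0 < den r t.
Proof. intros Hr. eapply Rlt_le_trans. 2: apply den_pos; auto. apply pow_lt. lra. Qed.

Lemma Kf_cont r k t : Rabs r < 1 -> continuous (Kf r k) t.
Proof.
  intros Hr. apply dcont. unfold Kf, den.
  auto_derive. pose proof (den_gt0 r t Hr). unfold den in H. lra.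
Qed.

Lemma Kf_ex r k : Rabs r < 1 -> ex_RInt (Kf r k) 0 PI.
Proof. intros Hr. apply exRc. intros; apply Kf_cont; auto. Qed.

Lemma RInt_lin3 (f g h : R -> R) a b c :
  ex_RInt f 0 PI -> ex_RInt g 0 PI -> ex_RInt h 0 PI ->
  RInt (fun x => a * f x + b * g x + c * h x) 0 PI = a * RInt f 0 PI + b * RInt g 0 PI + c * RInt h 0 PI.
Proof.
  intros Hf Hg Hh. apply RIu.
  apply (is_RInt_plus (fun x => a * f x + b * g x) (fun x => c * h x)).
  apply (is_RInt_plus (fun x => a * f x) (fun x => b * g x)).
  apply (is_RInt_scal f 0 PI a). apply RIc; auto.
  apply (is_RInt_scal g 0 PI b). apply RIc; auto.
  apply (is_RInt_scal h 0 PI c). apply RIc; auto.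
Qed.

Lemma cos_int (k : nat) : RInt (fun t => cos (INR k * t)) 0 PI = if Nat.eqb k 0 then PI else 0.
Proof.
  destruct k as [|k].
  - simpl. rewrite (RIe _ (fun _ => 1)). rewrite RInt_const. unfold scal; simpl; unfold mult; simpl. ring.
    intros. rewrite Rmult_0_l, cos_0. auto.
  - simpl Nat.eqb. apply RIu.
    assert (Hk : INR (S k) <> 0) by (apply not_0_INR; lia).
    assert (Hs : sin (INR (S k) * PI) = 0).
    { apply sin_eq_0_1. exists (Z.of_nat (S k)). rewrite <- INR_IZR_INZ. auto. }
    revert Hk Hs. generalize (INR (S k)) as m. intros m Hm Hs.
    eapply isR_eq.
    apply (is_RInt_derive (fun t => sin (m * t) / m)).
    + intros x _. auto_derive. auto. field. auto.
    + intros x _. apply dcont. auto_derive. auto.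
    + rewrite Rmult_0_r, sin_0, Hs. unfold minus, plus, opp; simpl. field. auto.
Qed.

Lemma cos_sum_id (a t : R) : cos (a + 2 * t) + cos (a - 2 * t) = 2 * cos a * cos (2 * t).
Proof. rewrite cos_plus, cos_minus. ring. Qed.

Lemma K_rec_gen r k k2 km (Hr : Rabs r < 1) :
  (forall t, cos (INR k2 * t) + cos (INR km * t) = 2 * cos (INR k * t) * cos (2 * t)) ->
  (1 + r ^ 2) * KI r k - r * KI r k2 - r * KI r km = if Nat.eqb k 0 then PI else 0.
Proof.
  intros Hid. rewrite <- cos_int.
  transitivity (RInt (fun t => (1+r^2) * Kf r k t + (-r) * Kf r k2 t + (-r) * Kf r km t) 0 PI).
  { rewrite RInt_lin3 by (apply Kf_ex; auto). unfold KI. ring. }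
  apply RIe. intros t _. unfold Kf.
  pose proof (den_gt0 r t Hr). replace (cos (INR k * t)) with (cos (INR k * t) * den r t / den r t) at 1 by (field; lra).
  replace (cos (INR km * t)) with (2 * cos (INR k * t) * cos (2 * t) - cos (INR k2 * t)) by (rewrite <- Hid; ring).
  unfold den. field. unfold den in H. lra.
Qed.

Lemma K_rec_hi r m : Rabs r < 1 ->
  (1 + r ^ 2) * KI r (m + 2) - r * KI r (m + 4) - r * KI r m = 0.
Proof.
  intros Hr. rewrite (K_rec_gen r (m+2) (m+4) m Hr).
  - destruct (Nat.eqb_spec (m+2) 0); [lia|auto].
  - intros t. rewrite !plus_INR. simpl INR.
    replace ((INR m + (1 + 1 + 1 + 1)) * t) with ((INR m + (1 + 1)) * t + 2 * t) by ring.
    replace (INR m * t) with ((INR m + (1 + 1)) * t - 2 * t) by ring. apply cos_sum_id.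
Qed.

Lemma K_rec_1 r : Rabs r < 1 -> (1 + r ^ 2) * KI r 1 - r * KI r 3 - r * KI r 1 = 0.
Proof.
  intros Hr. rewrite (K_rec_gen r 1 3 1 Hr). reflexivity.
  intros t. simpl INR.
  replace ((1 + 1 + 1) * t) with (1 * t + 2 * t) by ring.
  replace (cos (1 * t)) with (cos (1 * t - 2 * t)) at 1.
  apply cos_sum_id. replace (1 * t - 2 * t) with (- (1 * t)) by ring. apply cos_neg.
Qed.

Lemma K_rec_0 r : Rabs r < 1 -> (1 + r ^ 2) * KI r 0 - r * KI r 2 - r * KI r 2 = PI.
Proof.
  intros Hr. rewrite (K_rec_gen r 0 2 2 Hr). reflexivity.
  intros t. simpl INR.
  replace ((1 + 1) * t) with (0 * t + 2 * t) by ring.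
  replace (cos (0 * t + 2 * t)) with (cos (0 * t - 2 * t)) at 2.
  apply cos_sum_id. replace (0 * t - 2 * t) with (- (0 * t + 2 * t)) by ring. apply cos_neg.
Qed.

Lemma KI_bound r k : Rabs r < 1 -> Rabs (KI r k) <= PI * / (1 - Rabs r) ^ 2.
Proof.
  intros Hr. unfold KI. eapply Rle_trans. apply (abs_RInt_le_const _ 0 PI (/ (1 - Rabs r)^2)).
  pose proof PI_RGT_0; lra. apply Kf_ex; auto.
  intros t _. unfold Kf. unfold Rdiv. rewrite Rabs_mult.
  pose proof (den_pos r t Hr). pose proof (den_gt0 r t Hr).
  assert (0 < (1 - Rabs r)^2) by (apply pow_lt; lra).
  rewrite Rabs_inv, (Rabs_pos_eq (den r t)) by lra.
  assert (Rabs (cos (INR k * t)) <= 1) by (apply Rabs_le; apply COS_bound).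
  apply Rle_trans with (1 * / den r t). apply Rmult_le_compat_r. left; apply Rinv_0_lt_compat; lra. auto.
  rewrite Rmult_1_l. apply Rinv_le_contravar; auto.
  right; ring.
Qed.

Lemma zero_of_geom (x b r : R) : Rabs r < 1 -> (forall n, Rabs x <= Rabs r ^ n * b) -> x = 0.
Proof.
  intros Hr H. destruct (Req_dec x 0) as [|Hx]; auto. exfalso.
  assert (Hb : 0 < b). { specialize (H O). simpl in H. pose proof (Rabs_pos_lt x Hx). lra. }
  assert (Hy : 0 < Rabs x / b) by (apply Rdiv_lt_0_compat; auto; apply Rabs_pos_lt; auto).
  destruct (pow_lt_1_zero (Rabs r) ltac:(rewrite Rabs_Rabsolu; auto) _ Hy) as [N HN].
  specialize (HN N (le_n N)). specialize (H N). rewrite Rabs_pos_eq in HN by (apply pow_le, Rabs_pos).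
  apply (Rmult_lt_compat_r b) in HN; auto. unfold Rdiv in HN. rewrite Rmult_assoc, Rinv_l in HN by lra. lra.
Qed.

Lemma K_step r m : Rabs r < 1 -> KI r (m + 2) = r * KI r m.
Proof.
  intros Hr. set (D := fun m => KI r (m + 2) - r * KI r m).
  assert (HD : forall m, D m = r * D (m + 2)%nat).
  { intros p. unfold D. pose proof (K_rec_hi r p Hr). replace (p + 2 + 2)%nat with (p + 4)%nat by lia. lra. }
  assert (HDn : forall n m, D m = r ^ n * D (m + 2 * n)%nat).
  { induction n; intros p. simpl. rewrite Nat.add_0_r. ring.
    rewrite IHn, HD. replace (p + 2 * n + 2)%nat with (p + 2 * S n)%nat by lia. simpl. ring. }
  set (M := PI * / (1 - Rabs r) ^ 2).
  assert (HDb : forall m, Rabs (D m) <= (1 + Rabs r) * M).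
  { intros p. unfold D. eapply Rle_trans. apply Rabs_triang. rewrite Rabs_Ropp, Rabs_mult.
    pose proof (KI_bound r (p+2) Hr). pose proof (KI_bound r p Hr). fold M in H, H0.
    pose proof (Rabs_pos r). nra. }
  assert (D m = 0).
  { apply (zero_of_geom _ ((1 + Rabs r) * M) r Hr). intros n. rewrite (HDn n m), Rabs_mult, <- RPow_abs.
    apply Rmult_le_compat_l. apply pow_le, Rabs_pos. auto. }
  unfold D in H. lra.
Qed.

Lemma K1_zero r : Rabs r < 1 -> KI r 1 = 0.
Proof.
  intros Hr. pose proof (K_rec_1 r Hr). pose proof (K_step r 1 Hr). simpl in H0.
  rewrite H0 in H. assert (r <> 1) by (intro; subst; rewrite Rabs_R1 in Hr; lra).
  assert ((1 - r) * KI r 1 = 0) by (rewrite <- H; ring).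
  apply Rmult_integral in H2. destruct H2; auto. lra.
Qed.

Lemma K0_val r : Rabs r < 1 -> KI r 0 * (1 - r ^ 2) = PI.
Proof.
  intros Hr. pose proof (K_rec_0 r Hr). pose proof (K_step r 0 Hr). simpl in H0.
  rewrite H0 in H. rewrite <- H. ring.
Qed.

Definition C1 (f : R -> R) := exists df : R -> R,
  (forall x, is_derive f x (df x)) /\ (forall x, continuous df x).

Lemma cR_plus (f g : R -> R) x : continuous f x -> continuous g x -> continuous (fun y => f y + g y) x.
Proof. apply (continuous_plus (U:=R_UniformSpace) (K:=R_AbsRing) (V:=R_NormedModule)). Qed.
Lemma cR_mult (f g : R -> R) x : continuous f x -> continuous g x -> continuous (fun y => f y * g y) x.
Proof. apply (continuous_mult (U:=R_UniformSpace) (K:=R_AbsRing)). Qed.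
Lemma cR_const (c x : R) : continuous (fun _ : R => c) x.
Proof. apply (continuous_const (U:=R_UniformSpace) (V:=R_UniformSpace)). Qed.
Lemma cR_comp (f g : R -> R) x : continuous f x -> continuous g (f x) -> continuous (fun y => g (f y)) x.
Proof. apply (continuous_comp (U:=R_UniformSpace) (V:=R_UniformSpace) (W:=R_UniformSpace)). Qed.
Lemma cR_ext (f g : R -> R) x : (forall y, f y = g y) -> continuous f x -> continuous g x.
Proof. intros H. replace g with f; auto. apply functional_extensionality; auto. Qed.

Lemma dR_plus (f g : R -> R) x a b : is_derive f x a -> is_derive g x b -> is_derive (fun y => f y + g y) x (a + b).
Proof. apply (is_derive_plus (K:=R_AbsRing) (V:=R_NormedModule)). Qed.
Lemma dR_mult (f g : R -> R) x a b : is_derive f x a -> is_derive g x b -> is_derive (fun y => f y * g y) x (a * g x + f x * b).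
Proof. intros. apply (is_derive_mult (K:=R_AbsRing)); auto. intros; apply Rmult_comm. Qed.
Lemma dR_comp (f g : R -> R) x a b : is_derive g (f x) a -> is_derive f x b -> is_derive (fun y => g (f y)) x (b * a).
Proof. intros. apply (is_derive_comp (K:=R_AbsRing) (V:=R_NormedModule)); auto. Qed.
Lemma dR_ext (f g : R -> R) x a : (forall y, f y = g y) -> is_derive f x a -> is_derive g x a.
Proof. intros H. replace g with f; auto. apply functional_extensionality; auto. Qed.

Lemma C1_cont f x : C1 f -> continuous f x.
Proof. intros [df [H1 H2]]. apply dcont. exists (df x). auto. Qed.
Lemma C1_ext f g : (forall x, f x = g x) -> C1 f -> C1 g.
Proof. intros H. replace g with f; auto. apply functional_extensionality; auto. Qed.
Lemma C1_const c : C1 (fun _ => c).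
Proof. exists (fun _ => 0). split; intros x. apply (is_derive_const (K:=R_AbsRing) (V:=R_NormedModule)). apply cR_const. Qed.
Lemma C1_id : C1 (fun x => x).
Proof. exists (fun _ => 1). split; intros x. apply (is_derive_id (K:=R_AbsRing)). apply cR_const. Qed.
Lemma C1_plus f g : C1 f -> C1 g -> C1 (fun x => f x + g x).
Proof.
  intros [df [H1 H2]] [dg [H3 H4]]. exists (fun x => df x + dg x). split; intros x.
  apply dR_plus; auto. apply cR_plus; auto.
Qed.
Lemma C1_mult f g : C1 f -> C1 g -> C1 (fun x => f x * g x).
Proof.
  intros Hf Hg. pose proof Hf as [df [H1 H2]]. pose proof Hg as [dg [H3 H4]].
  exists (fun x => df x * g x + f x * dg x). split; intros x.
  apply dR_mult; auto. apply cR_plus; apply cR_mult; auto; apply C1_cont; auto.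
Qed.
Lemma C1_comp f g : C1 f -> C1 g -> C1 (fun x => g (f x)).
Proof.
  intros Hf Hg. pose proof Hf as [df [H1 H2]]. pose proof Hg as [dg [H3 H4]].
  exists (fun x => df x * dg (f x)). split; intros x.
  apply dR_comp; auto. apply cR_mult; auto. apply cR_comp; auto. apply C1_cont; auto.
Qed.
Lemma C1_sin : C1 sin.
Proof. exists cos. split; intros x. apply is_derive_sin. apply continuous_cos. Qed.
Lemma C1_cos : C1 cos.
Proof.
  exists (fun x => - sin x). split; intros x. apply is_derive_cos.
  apply (cR_ext (fun y => (-1) * sin y)). intros; ring. apply cR_mult. apply cR_const.
  apply C1_cont, C1_sin.
Qed.
Lemma C1_inv f : (forall x, f x <> 0) -> C1 f -> C1 (fun x => / f x).
Proof.
  intros Hn Hf. pose proof Hf as [df [H1 H2]].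
  exists (fun x => - df x / f x ^ 2). split; intros x.
  apply is_derive_inv; auto.
  apply (cR_ext (fun y => (-1) * df y * / (f y * f y))). intros; simpl; field; auto.
  apply cR_mult. apply cR_mult; auto. apply cR_const.
  apply continuous_Rinv_comp. apply cR_mult; apply C1_cont; auto.
  apply Rmult_integral_contrapositive; auto.
Qed.
Lemma C1_scal c f : C1 f -> C1 (fun x => c * f x).
Proof. intros; apply C1_mult; auto; apply C1_const. Qed.

Lemma C1_pol B C n : C1 (pol B C n) /\ C1 (pol B C (S n)).
Proof.
  induction n.
  - split. apply C1_const. simpl. apply (C1_ext (fun x => x * / C)). reflexivity.
    apply C1_mult. apply C1_id. apply C1_const.
  - destruct IHn as [H1 H2]. split; auto.
    apply (C1_ext (fun x => (x * pol B C (S n) x + (- offdiag B C n) * pol B C n x) * / B)).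
    intros x. change (pol B C (S (S n)) x) with ((x * pol B C (S n) x - offdiag B C n * pol B C n x) / B). unfold Rdiv. ring.
    apply C1_mult; [|apply C1_const]. apply C1_plus. apply C1_mult; auto. apply C1_id.
    apply C1_scal; auto.
Qed.

Lemma C1_q B C k : C1 (q B C k).
Proof.
  unfold q. apply C1_mult. apply C1_sin.
  apply (C1_comp (fun t => 2 * B * cos t)). apply C1_scal, C1_cos. apply (proj1 (C1_pol B C k)).
Qed.

Definition cc (B C : R) := C ^ 2 / B ^ 2.
Definition rr (B C : R) := cc B C - 1.
Definition wt (B C : R) (t : R) := 2 * cc B C / PI / den (rr B C) t.
Definition G (B C : R) (k l : nat) : R := RInt (fun t => q B C k t * q B C l t * wt B C t) 0 PI.

Lemma rr_bound B C : 0 < B -> 0 < C -> C < sqrt 2 * B -> Rabs (rr B C) < 1.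
Proof.
  intros HB HC H. unfold rr, cc.
  assert (C ^ 2 < 2 * B ^ 2).
  { assert (0 <= C) by lra. pose proof (sqrt_pos 2).
    assert (C * C < (sqrt 2 * B) * (sqrt 2 * B)) by (apply Rmult_le_0_lt_compat; lra).
    replace ((sqrt 2 * B) * (sqrt 2 * B)) with (sqrt 2 * sqrt 2 * (B * B)) in H2 by ring.
    rewrite sqrt_sqrt in H2 by lra. simpl. lra. }
  assert (0 < C ^ 2 / B ^ 2) by (apply Rdiv_lt_0_compat; apply pow_lt; lra).
  assert (C ^ 2 / B ^ 2 < 2).
  { apply (Rmult_lt_reg_r (B^2)). apply pow_lt; lra. unfold Rdiv. rewrite Rmult_assoc, Rinv_l. lra.
    apply pow_nonzero; lra. }
  apply Rabs_def1; lra.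
Qed.

Lemma wt_C1 B C : Rabs (rr B C) < 1 -> C1 (wt B C).
Proof.
  intros Hr. unfold wt. apply (C1_ext (fun t => (2 * cc B C / PI) * / den (rr B C) t)).
  intros; unfold Rdiv; ring.
  apply C1_scal. apply C1_inv. intros t. pose proof (den_gt0 _ t Hr). lra.
  unfold den. apply C1_plus; [|apply C1_const].
  apply (C1_ext (fun t => 1 + (-2 * rr B C) * cos (2 * t))). intros; ring.
  apply C1_plus. apply C1_const. apply C1_scal. apply (C1_comp (fun t => 2 * t)).
  apply C1_scal, C1_id. apply C1_cos.
Qed.

Lemma G_ex B C k l : Rabs (rr B C) < 1 -> ex_RInt (fun t => q B C k t * q B C l t * wt B C t) 0 PI.
Proof.
  intros Hr. apply exRc. intros z _. apply C1_cont.
  apply C1_mult. apply C1_mult; apply C1_q. apply wt_C1; auto.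
Qed.

Lemma sin_sum_id (a t : R) : sin (a + t) + sin (a - t) = 2 * sin a * cos t.
Proof. rewrite sin_plus, sin_minus. ring. Qed.

Lemma sin3 t : sin (3 * t) = sin t * (4 * cos t ^ 2 - 1).
Proof.
  replace (3 * t) with (2 * t + t) by ring. rewrite sin_plus, sin_2a, cos_2a_cos.
  pose proof (sin2_cos2 t). unfold Rsqr in H. nra.
Qed.

Lemma sine_formula B C m t : 0 < B -> 0 < C ->
  C * q B C (S m) t = B * (sin ((INR m + 2) * t) - rr B C * sin (INR m * t)).
Proof.
  intros HB HC.
  assert (H : forall m, C * q B C (S m) t = B * (sin ((INR m + 2) * t) - rr B C * sin (INR m * t))
                  /\ C * q B C (S (S m)) t = B * (sin ((INR (S m) + 2) * t) - rr B C * sin (INR (S m) * t))).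
  { induction m0.
    - split.
      + unfold q. simpl pol. replace ((INR 0 + 2) * t) with (2 * t) by (simpl; ring).
        replace (INR 0 * t) with 0 by (simpl; ring). rewrite sin_0, sin_2a. field. lra.
      + unfold q, rr, cc. simpl pol. replace ((INR 1 + 2) * t) with (3 * t) by (simpl; ring).
        replace (INR 1 * t) with t by (simpl; ring). rewrite sin3. field. lra.
    - destruct IHm0 as [H1 H2]. split; auto.
      unfold q. change (pol B C (S (S (S m0))) (2 * B * cos t)) with
        ((2 * B * cos t * pol B C (S (S m0)) (2 * B * cos t) - offdiag B C (S m0) * pol B C (S m0) (2 * B * cos t)) / B).
      simpl offdiag. unfold q in H1, H2.
      replace (C * (sin t * ((2 * B * cos t * pol B C (S (S m0)) (2 * B * cos t) - B * pol B C (S m0) (2 * B * cos t)) / B)))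
        with (2 * cos t * (C * (sin t * pol B C (S (S m0)) (2 * B * cos t))) - C * (sin t * pol B C (S m0) (2 * B * cos t)))
        by (field; lra).
      rewrite H1, H2. rewrite !S_INR.
      pose proof (sin_sum_id ((INR m0 + 1 + 2) * t) t) as E1.
      pose proof (sin_sum_id ((INR m0 + 1) * t) t) as E2.
      replace ((INR m0 + 1 + 2) * t + t) with ((INR m0 + 1 + 1 + 2) * t) in E1 by ring.
      replace ((INR m0 + 1 + 2) * t - t) with ((INR m0 + 2) * t) in E1 by ring.
      replace ((INR m0 + 1) * t + t) with ((INR m0 + 1 + 1) * t) in E2 by ring.
      replace ((INR m0 + 1) * t - t) with (INR m0 * t) in E2 by ring.
      replace ((INR m0 + 1 + 1 + 2) * t) with ((INR m0 + 1 + 1 + 2) * t) by ring.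
      replace ((INR m0 + 2) * t) with ((INR m0 + 1 + 1) * t) in * by ring.
      nra. }
  apply H.
Qed.

Lemma prod_sin a b : sin a * sin b = (cos (a - b) - cos (a + b)) / 2.
Proof. rewrite cos_minus, cos_plus. field. Qed.


Lemma cc_rr B C : cc B C = 1 + rr B C.
Proof. unfold rr; ring. Qed.

Lemma G00 B C : 0 < B -> 0 < C -> Rabs (rr B C) < 1 -> G B C 0 0 = 1.
Proof.
  intros HB HC Hr. set (r := rr B C) in *. unfold G.
  rewrite (RIe _ (fun t => (cc B C / PI) * Kf r 0 t + (-(cc B C / PI)) * Kf r 2 t + 0 * Kf r 2 t)).
  - rewrite RInt_lin3 by (apply Kf_ex; auto). fold (KI r 0) (KI r 2).
    pose proof (K_step r 0 Hr) as E. simpl in E. rewrite E.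
    pose proof (K0_val r Hr). rewrite cc_rr. fold r. pose proof PI_RGT_0.
    transitivity (KI r 0 * (1 - r ^ 2) / PI). field. lra. rewrite H. field. lra.
  - intros t _. unfold Kf, wt, q. fold r. pose proof (den_gt0 r t Hr).
    replace (INR 0 * t) with 0 by (simpl; ring). replace (INR 2 * t) with (2 * t) by (simpl; ring).
    rewrite cos_0, cos_2a_sin. simpl pol. unfold Rsqr. field. split. lra. pose proof PI_RGT_0. lra.
Qed.

Lemma G0S B C m : 0 < B -> 0 < C -> Rabs (rr B C) < 1 -> G B C 0 (S m) = 0.
Proof.
  intros HB HC Hr.
  assert (Hq : forall t, q B C (S m) t = B * (sin ((INR m + 2) * t) - rr B C * sin (INR m * t)) / C).
  { intros t. rewrite <- sine_formula by auto. field. lra. }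
  set (r := rr B C) in *. unfold G.
  set (al := B * cc B C / (C * PI)).
  pose proof PI_RGT_0.
  destruct m as [|p].
  - rewrite (RIe _ (fun t => al * Kf r 1 t + (- al) * Kf r 3 t + 0 * Kf r 3 t)).
    + rewrite RInt_lin3 by (apply Kf_ex; auto). fold (KI r 1) (KI r 3).
      pose proof (K_step r 1 Hr) as E. simpl in E. rewrite E, K1_zero by auto. ring.
    + intros t _. unfold Kf, wt. rewrite Hq. fold r. pose proof (den_gt0 r t Hr).
      replace (INR 0 * t) with 0 by (simpl; ring). rewrite sin_0.
      replace ((INR 0 + 2) * t) with (2 * t) by (simpl; ring).
      replace (INR 3 * t) with (2 * t + t) by (simpl; ring). replace (INR 1 * t) with (2 * t - t) by (simpl; ring).
      rewrite cos_plus, cos_minus. unfold q. simpl pol. unfold al. field. repeat split; lra.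
  - rewrite (RIe _ (fun t => (al * (1 + r)) * Kf r (p + 2) t + (- al) * Kf r (p + 4) t + (- al * r) * Kf r p t)).
    + rewrite RInt_lin3 by (apply Kf_ex; auto). fold (KI r (p + 2)) (KI r (p + 4)) (KI r p).
      pose proof (K_step r (p + 2) Hr) as E. replace (p + 2 + 2)%nat with (p + 4)%nat in E by lia.
      rewrite E, (K_step r p Hr). ring.
    + intros t _. unfold Kf, wt. rewrite Hq. fold r. pose proof (den_gt0 r t Hr).
      rewrite !plus_INR, S_INR. simpl INR.
      set (a := INR p * t).
      replace ((INR p + 1 + 2) * t) with ((a + 2 * t) + t) by (unfold a; ring).
      replace ((INR p + 1) * t) with (a + t) by (unfold a; ring).
      replace ((INR p + (1 + 1)) * t) with (a + 2 * t) by (unfold a; ring).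
      replace ((INR p + (1 + 1 + 1 + 1)) * t) with ((a + 2 * t) + 2 * t) by (unfold a; ring).
      unfold q. simpl pol.
      assert (E1 : sin t * sin (a + 2 * t + t) = (cos (a + 2 * t) - cos (a + 2 * t + 2 * t)) / 2).
      { rewrite Rmult_comm, prod_sin. f_equal. f_equal. f_equal. ring. f_equal. ring. }
      assert (E2 : sin t * sin (a + t) = (cos a - cos (a + 2 * t)) / 2).
      { rewrite Rmult_comm, prod_sin. f_equal. f_equal. f_equal. ring. f_equal. ring. }
      transitivity ((B / C) * (2 * cc B C / PI / den r t) * (sin t * sin (a + 2 * t + t) - r * (sin t * sin (a + t)))).
      field. repeat split; lra.
      rewrite E1, E2. unfold al. field. repeat split; lra.
Qed.

Lemma applyH_RInt B C (F : nat -> R -> R) k : (forall m, ex_RInt (F m) 0 PI) ->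
  applyH B C (fun m => RInt (F m) 0 PI) k = RInt (fun t => applyH B C (fun m => F m t) k) 0 PI.
Proof.
  intros HF. destruct k as [|k].
  - simpl. rewrite (RIe (fun t => offdiag B C 0 * F 1%nat t) (fun t => C * F 1%nat t + 0 * F 1%nat t + 0 * F 1%nat t)).
    rewrite RInt_lin3 by auto. rewrite !Rmult_0_l, !Rplus_0_r. reflexivity. intros; simpl; ring.
  - simpl. rewrite (RIe (fun t => offdiag B C k * F k t + B * F (S (S k)) t) (fun t => offdiag B C k * F k t + B * F (S (S k)) t + 0 * F k t)).
    rewrite RInt_lin3 by auto. rewrite !Rmult_0_l, !Rplus_0_r. reflexivity. intros; ring.
Qed.

Lemma applyH_scal_r B C (v : nat -> R) c k : applyH B C (fun m => v m * c) k = applyH B C v k * c.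
Proof. destruct k; simpl; ring. Qed.

Lemma G_rel B C k l : 0 < B -> 0 < C -> Rabs (rr B C) < 1 ->
  applyH B C (fun m => G B C m l) k = applyH B C (fun m => G B C k m) l.
Proof.
  intros HB HC Hr. unfold G.
  rewrite !(applyH_RInt B C) by (intros; apply G_ex; auto).
  apply RIe. intros t _.
  rewrite (applyH_scal_r B C (fun m => q B C m t * q B C l t) (wt B C t)).
  rewrite (applyH_scal_r B C (fun m => q B C k t * q B C m t) (wt B C t)).
  rewrite (applyH_scal_r B C (fun m => q B C m t) (q B C l t)).
  rewrite (applyH_scal B C (q B C k t) (fun m => q B C m t)).
  rewrite !q_rec by lra. ring.
Qed.

Lemma applyH_delta B C n l :
  applyH B C (fun m => if Nat.eqb n m then 1 else 0) l =
  (if Nat.eqb l (S n) then offdiag B C n else 0) + (if Nat.eqb (S l) n then offdiag B C l else 0).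
Proof.
  destruct l as [|l]; unfold applyH; cbv beta;
  repeat match goal with |- context [Nat.eqb ?a ?b] => destruct (Nat.eqb_spec a b) end;
  subst; try lia; simpl; try ring.
Qed.

Lemma applyH_ext B C (v w : nat -> R) k : (forall m, v m = w m) -> applyH B C v k = applyH B C w k.
Proof. intros H. destruct k; simpl; rewrite !H; auto. Qed.

Opaque G.
Lemma orth B C k l : 0 < B -> 0 < C -> Rabs (rr B C) < 1 ->
  G B C k l = if Nat.eqb k l then 1 else 0.
Proof.
  intros HB HC Hr. revert l.
  assert (P0 : forall l, G B C 0 l = if Nat.eqb 0 l then 1 else 0).
  { intros [|l]. apply G00; auto. apply G0S; auto. }
  assert (H : forall k, (forall l, G B C k l = if Nat.eqb k l then 1 else 0) /\
                        (forall l, G B C (S k) l = if Nat.eqb (S k) l then 1 else 0)).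
  { induction k0.
    - split; auto. intros l. pose proof (G_rel B C 0 l HB HC Hr) as E.
      assert (E2: applyH B C (fun m => G B C 0 m) l = applyH B C (fun m => if Nat.eqb 0 m then 1 else 0) l) by (apply applyH_ext; auto).
      rewrite E2, applyH_delta in E.
      change (applyH B C (fun m => G B C m l) 0) with (C * G B C 1 l) in E.
      change (offdiag B C 0) with C in E.
      replace (S l =? 0) with false in E by reflexivity. rewrite Rplus_0_r in E.
      apply (Rmult_eq_reg_l C); [|lra]. rewrite E.
      destruct (Nat.eqb_spec l 1); destruct (Nat.eqb_spec 1 l); try lia; ring.
    - destruct IHk0 as [H1 H2]. split; auto. intros l.
      pose proof (G_rel B C (S k0) l HB HC Hr) as E.
      assert (E2: applyH B C (fun m => G B C (S k0) m) l = applyH B C (fun m => if Nat.eqb (S k0) m then 1 else 0) l) by (apply applyH_ext; auto).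
      rewrite E2, applyH_delta in E.
      change (applyH B C (fun m => G B C m l) (S k0)) with
        (offdiag B C k0 * G B C k0 l + offdiag B C (S k0) * G B C (S (S k0)) l) in E.
      rewrite H1 in E. change (offdiag B C (S k0)) with B in E.
      apply (Rmult_eq_reg_l B); [|lra].
      (destruct (Nat.eqb_spec l (S (S k0))); destruct (Nat.eqb_spec (S l) (S k0));
      destruct (Nat.eqb_spec k0 l); destruct (Nat.eqb_spec (S (S k0)) l); subst; try lia).
      all: first [ rewrite Rmult_0_r, Rplus_0_l, Rplus_0_r in E; rewrite E; ring
                 | rewrite Rmult_0_r, !Rplus_0_l in E; rewrite E; ring
                 | rewrite Rmult_1_r, Rplus_0_l in E; apply (Rplus_eq_reg_l (offdiag B C l)); rewrite E; ring ]. }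
  apply H.
Qed.
Transparent G.


Lemma is_series_lim (a : nat -> R) (l : R) : is_lim_seq (sum_n a) l -> is_series a l.
Proof. intros H. exact H. Qed.
Lemma is_lim_series (a : nat -> R) (l : R) : is_series a l -> is_lim_seq (sum_n a) l.
Proof. intros H. exact H. Qed.

Lemma ex_exp Y : ex_series (fun k => Y ^ k / INR (fact k)).
Proof.
  exists (exp Y). pose proof (is_exp_Reals Y) as H. unfold is_pseries in H.
  eapply is_series_ext; [|exact H]. intros n. rewrite pow_n_pow. reflexivity.
Qed.

Lemma series_nonneg (a : nat -> R) : (forall n, 0 <= a n) -> ex_series a -> 0 <= Series a.
Proof.
  intros H Ha. replace 0 with (Series (fun _ => 0)).
  apply Series_le; auto. intros; split; auto; lra.
  apply is_series_unique. apply is_series_lim. apply (is_lim_seq_ext (fun _ => 0)). 2: apply is_lim_seq_const.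
  intros n. induction n. rewrite sum_O; auto. rewrite sum_Sn, <- IHn. unfold plus; simpl; ring.
Qed.

Lemma sum_le_series (E : nat -> R) N : (forall n, 0 <= E n) -> ex_series E -> sum_n E N <= Series E.
Proof.
  intros H HE. rewrite (Series_incr_n E (S N)) by (auto; lia). simpl pred. rewrite sum_n_Reals.
  pose proof (series_nonneg (fun k => E (S N + k)%nat) (fun k => H _)). 
  assert (ex_series (fun k => E (S N + k)%nat)).
  { apply ex_series_incr_n. auto. }
  specialize (H0 H1). lra.
Qed.

Lemma series_abs_bound (a E : nat -> R) c : 0 <= c -> (forall n, Rabs (a n) <= c * E n) -> ex_series E ->
  ex_series a /\ Rabs (Series a) <= c * Series E.
Proof.
  intros Hc H HE. assert (HE0 : forall n, 0 <= c * E n) by (intros n; eapply Rle_trans; [apply Rabs_pos|apply H]).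
  assert (Hs : ex_series (fun n => c * E n)).
  { apply (ex_series_scal_l (K:=R_AbsRing) (V:=R_NormedModule) c E) in HE. exact HE. }
  assert (Ha : ex_series (fun n => Rabs (a n))).
  { apply (ex_series_le (K:=R_AbsRing) (V:=R_CompleteNormedModule) _ (fun n => c * E n)); auto.
    intros n. unfold norm; simpl. rewrite Rabs_Rabsolu. auto. }
  split. apply ex_series_Rabs; auto.
  eapply Rle_trans. apply Series_Rabs; auto. rewrite <- Series_scal_l. apply Series_le; auto.
  intros n; split; [apply Rabs_pos|auto].
Qed.

Lemma sum_abs_bound (a E : nat -> R) c N : (forall n, Rabs (a n) <= c * E n) ->
  Rabs (sum_n a N) <= c * sum_n E N.
Proof.
  intros H. induction N.
  - rewrite !sum_O. auto.
  - rewrite !sum_Sn. unfold plus; simpl. eapply Rle_trans. apply Rabs_triang.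
    specialize (H (S N)). lra.
Qed.

Lemma tail_bound (a E : nat -> R) c N : 0 <= c -> (forall n, Rabs (a n) <= c * E n) -> ex_series E ->
  Rabs (Series a - sum_n a N) <= c * (Series E - sum_n E N).
Proof.
  intros Hc H HE. destruct (series_abs_bound a E c Hc H HE) as [Ha _].
  rewrite (Series_incr_n a (S N)), (Series_incr_n E (S N)) by (auto; lia). simpl pred.
  rewrite !sum_n_Reals. replace (sum_f_R0 a N + Series (fun k => a (S N + k)%nat) - sum_f_R0 a N)
    with (Series (fun k => a (S N + k)%nat)) by ring.
  replace (sum_f_R0 E N + Series (fun k => E (S N + k)%nat) - sum_f_R0 E N)
    with (Series (fun k => E (S N + k)%nat)) by ring.
  apply (series_abs_bound (fun k => a (S N + k)%nat) (fun k => E (S N + k)%nat) c Hc).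
  intros; apply H. apply ex_series_incr_n; auto.
Qed.

Lemma tail_lim (E : nat -> R) : ex_series E -> is_lim_seq (fun N => Series E - sum_n E N) 0.
Proof.
  intros HE. apply Series_correct, is_lim_series in HE.
  replace 0 with (Series E - Series E) by ring.
  apply is_lim_seq_minus'. apply is_lim_seq_const.
  apply HE.
Qed.

Lemma series_fin (f : nat -> R) K : (forall k, (K < k)%nat -> f k = 0) -> Series f = sum_n f K.
Proof.
  intros H. apply is_series_unique. apply is_series_lim.
  apply (is_lim_seq_ext_loc (fun _ => sum_n f K)). 2: apply is_lim_seq_const.
  exists K. intros n Hn. induction Hn. auto. rewrite sum_Sn, <- IHHn, H by lia. unfold plus; simpl. symmetry. apply Rplus_0_r.
Qed.

Lemma ex_series_geomR (x : R) : Rabs x < 1 -> ex_series (fun n => x ^ n).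
Proof. intros H. eexists. apply is_series_geom; auto. Qed.

Definition Dc B C := 3 * (B + C).
Definition Xv B C t := Rabs t * Dc B C.
Definition Ee B C t m := Xv B C t ^ (2 * m) / INR (fact (2 * m)).
Definition Eo B C t m := Xv B C t ^ (2 * m + 1) / INR (fact (2 * m + 1)).
Definition gam (j k : nat) := 2 ^ j * (/ 2) ^ k.
Definition ae B C j t m k := (-1) ^ m * t ^ (2 * m) / INR (fact (2 * m)) * Hpow_e B C j (2 * m) k.
Definition ao B C j t m k := (-1) ^ m * t ^ (2 * m + 1) / INR (fact (2 * m + 1)) * Hpow_e B C j (2 * m + 1) k.

Lemma psi_re_eq B C j t k : psi_re B C j t k = Series (fun m => ae B C j t m k).
Proof. reflexivity. Qed.
Lemma psi_im_eq B C j t k : psi_im B C j t k = - Series (fun m => ao B C j t m k).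
Proof. reflexivity. Qed.

Lemma gam_pos j k : 0 < gam j k.
Proof. unfold gam. apply Rmult_lt_0_compat; apply pow_lt; lra. Qed.

Lemma fact_pos n : 0 < INR (fact n).
Proof. apply lt_0_INR, lt_O_fact. Qed.

Lemma Xv_nonneg B C t : 0 < B -> 0 < C -> 0 <= Xv B C t.
Proof. intros. unfold Xv, Dc. apply Rmult_le_pos. apply Rabs_pos. lra. Qed.

Lemma gen_bound B C j t n k : 0 < B -> 0 < C ->
  Rabs (t ^ n / INR (fact n) * Hpow_e B C j n k) <= gam j k * (Xv B C t ^ n / INR (fact n)).
Proof.
  intros HB HC. pose proof (h_bound B C j n k HB HC) as H. pose proof (fact_pos n).
  rewrite Rabs_mult. unfold Rdiv. rewrite Rabs_mult, Rabs_inv, (Rabs_pos_eq (INR _)) by lra.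
  rewrite <- RPow_abs. unfold Xv. rewrite Rpow_mult_distr. unfold gam, Dc.
  assert (0 <= Rabs t ^ n * / INR (fact n)).
  { apply Rmult_le_pos. apply pow_le, Rabs_pos. left; apply Rinv_0_lt_compat; lra. }
  replace (2 ^ j * (/ 2) ^ k * (Rabs t ^ n * (3 * (B + C)) ^ n * / INR (fact n)))
    with ((Rabs t ^ n * / INR (fact n)) * ((3 * (B + C)) ^ n * 2 ^ j * (/ 2) ^ k)) by ring.
  apply Rmult_le_compat_l; auto.
Qed.

Lemma abs_m1_pow m : Rabs ((-1) ^ m) = 1.
Proof. rewrite <- RPow_abs. replace (Rabs (-1)) with 1 by (unfold Rabs; destruct Rcase_abs; lra). apply pow1. Qed.

Lemma ae_bound B C j t m k : 0 < B -> 0 < C -> Rabs (ae B C j t m k) <= gam j k * Ee B C t m.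
Proof.
  intros. unfold ae, Ee. replace ((-1) ^ m * t ^ (2 * m) / INR (fact (2 * m)) * Hpow_e B C j (2 * m) k)
    with ((-1) ^ m * (t ^ (2 * m) / INR (fact (2 * m)) * Hpow_e B C j (2 * m) k)) by (unfold Rdiv; ring).
  rewrite Rabs_mult, abs_m1_pow, Rmult_1_l. apply gen_bound; auto.
Qed.

Lemma ao_bound B C j t m k : 0 < B -> 0 < C -> Rabs (ao B C j t m k) <= gam j k * Eo B C t m.
Proof.
  intros. unfold ao, Eo. replace ((-1) ^ m * t ^ (2 * m + 1) / INR (fact (2 * m + 1)) * Hpow_e B C j (2 * m + 1) k)
    with ((-1) ^ m * (t ^ (2 * m + 1) / INR (fact (2 * m + 1)) * Hpow_e B C j (2 * m + 1) k)) by (unfold Rdiv; ring).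
  rewrite Rabs_mult, abs_m1_pow, Rmult_1_l. apply gen_bound; auto.
Qed.

Lemma Ee_nonneg B C t m : 0 < B -> 0 < C -> 0 <= Ee B C t m.
Proof. intros. unfold Ee. apply Rdiv_le_0_compat. apply pow_le, Xv_nonneg; auto. apply fact_pos. Qed.
Lemma Eo_nonneg B C t m : 0 < B -> 0 < C -> 0 <= Eo B C t m.
Proof. intros. unfold Eo. apply Rdiv_le_0_compat. apply pow_le, Xv_nonneg; auto. apply fact_pos. Qed.

Lemma fact_INR_le n m : (n <= m)%nat -> INR (fact n) <= INR (fact m).
Proof. intros. apply le_INR, fact_le; auto. Qed.

Lemma Ee_ex B C t : 0 < B -> 0 < C -> ex_series (Ee B C t).
Proof.
  intros HB HC. pose proof (Xv_nonneg B C t HB HC) as HX.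
  apply (ex_series_le (K:=R_AbsRing) (V:=R_CompleteNormedModule) _ (fun m => (Xv B C t ^ 2) ^ m / INR (fact m))).
  2: apply ex_exp.
  intros m. unfold norm; simpl. rewrite Rabs_pos_eq by (apply Ee_nonneg; auto).
  unfold Ee. rewrite pow_mult. unfold Rdiv. apply Rmult_le_compat_l. apply pow_le; nra.
  apply Rinv_le_contravar. apply fact_pos. apply fact_INR_le; lia.
Qed.

Lemma Eo_ex B C t : 0 < B -> 0 < C -> ex_series (Eo B C t).
Proof.
  intros HB HC. pose proof (Xv_nonneg B C t HB HC) as HX.
  apply (ex_series_le (K:=R_AbsRing) (V:=R_CompleteNormedModule) _ (fun m => Xv B C t * ((Xv B C t ^ 2) ^ m / INR (fact m)))).
  2: apply (ex_series_scal_l (K:=R_AbsRing) (V:=R_NormedModule)); apply ex_exp.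
  intros m. unfold norm; simpl. rewrite Rabs_pos_eq by (apply Eo_nonneg; auto).
  unfold Eo. rewrite pow_add, pow_mult, pow_1. unfold Rdiv.
  replace ((Xv B C t ^ 2) ^ m * Xv B C t * / INR (fact (2 * m + 1)))
    with ((Xv B C t * (Xv B C t ^ 2) ^ m) * / INR (fact (2 * m + 1))) by ring.
  rewrite <- Rmult_assoc. apply Rmult_le_compat_l. apply Rmult_le_pos; auto. apply pow_le; nra.
  apply Rinv_le_contravar. apply fact_pos. apply fact_INR_le; lia.
Qed.

Definition uN B C j t N k := sum_n (fun m => ae B C j t m k) N.
Definition vN B C j t N k := - sum_n (fun m => ao B C j t m k) N.
Definition ptN B C j t N k := (-1) ^ k * (uN B C j t N k ^ 2 + vN B C j t N k ^ 2).
Definition pt B C j t k := (-1) ^ k * (psi_re B C j t k ^ 2 + psi_im B C j t k ^ 2).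

Lemma u_close B C j t N k : 0 < B -> 0 < C ->
  Rabs (psi_re B C j t k - uN B C j t N k) <= gam j k * (Series (Ee B C t) - sum_n (Ee B C t) N).
Proof.
  intros HB HC. rewrite psi_re_eq. unfold uN. apply tail_bound.
  left; apply gam_pos. intros; apply ae_bound; auto. apply Ee_ex; auto.
Qed.
Lemma v_close B C j t N k : 0 < B -> 0 < C ->
  Rabs (psi_im B C j t k - vN B C j t N k) <= gam j k * (Series (Eo B C t) - sum_n (Eo B C t) N).
Proof.
  intros HB HC. rewrite psi_im_eq. unfold vN.
  replace (- Series (fun m => ao B C j t m k) - - sum_n (fun m => ao B C j t m k) N)
    with (- (Series (fun m => ao B C j t m k) - sum_n (fun m => ao B C j t m k) N)) by ring.
  rewrite Rabs_Ropp. apply tail_bound.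
  left; apply gam_pos. intros; apply ao_bound; auto. apply Eo_ex; auto.
Qed.
Lemma u_bnd B C j t k : 0 < B -> 0 < C -> Rabs (psi_re B C j t k) <= gam j k * Series (Ee B C t).
Proof.
  intros HB HC. rewrite psi_re_eq. apply series_abs_bound. left; apply gam_pos.
  intros; apply ae_bound; auto. apply Ee_ex; auto.
Qed.
Lemma v_bnd B C j t k : 0 < B -> 0 < C -> Rabs (psi_im B C j t k) <= gam j k * Series (Eo B C t).
Proof.
  intros HB HC. rewrite psi_im_eq, Rabs_Ropp. apply series_abs_bound. left; apply gam_pos.
  intros; apply ao_bound; auto. apply Eo_ex; auto.
Qed.
Lemma uN_bnd B C j t N k : 0 < B -> 0 < C -> Rabs (uN B C j t N k) <= gam j k * Series (Ee B C t).
Proof.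
  intros HB HC. unfold uN. eapply Rle_trans. apply sum_abs_bound. intros; apply ae_bound; auto.
  apply Rmult_le_compat_l. left; apply gam_pos. apply sum_le_series. intros; apply Ee_nonneg; auto. apply Ee_ex; auto.
Qed.
Lemma vN_bnd B C j t N k : 0 < B -> 0 < C -> Rabs (vN B C j t N k) <= gam j k * Series (Eo B C t).
Proof.
  intros HB HC. unfold vN. rewrite Rabs_Ropp. eapply Rle_trans. apply sum_abs_bound. intros; apply ao_bound; auto.
  apply Rmult_le_compat_l. left; apply gam_pos. apply sum_le_series. intros; apply Eo_nonneg; auto. apply Eo_ex; auto.
Qed.

Lemma sq_diff a b : Rabs (a ^ 2 - b ^ 2) <= Rabs (a - b) * (Rabs a + Rabs b).
Proof.
  replace (a ^ 2 - b ^ 2) with ((a - b) * (a + b)) by ring. rewrite Rabs_mult.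
  apply Rmult_le_compat_l. apply Rabs_pos. apply Rabs_triang.
Qed.

Lemma g2_eq j k : (2 ^ j * 2 ^ j) * (/ 4) ^ k = gam j k * gam j k.
Proof. unfold gam. replace (/ 4) with (/ 2 * / 2) by field. rewrite Rpow_mult_distr. ring. Qed.

Lemma g2_ex j : ex_series (fun k => gam j k * gam j k).
Proof.
  apply (ex_series_ext _ _ (g2_eq j)).
  apply (ex_series_scal_l (K:=R_AbsRing) (V:=R_NormedModule)). apply ex_series_geomR.
  rewrite Rabs_pos_eq; lra.
Qed.

Lemma SE_nonneg B C t : 0 < B -> 0 < C -> 0 <= Series (Ee B C t) /\ 0 <= Series (Eo B C t).
Proof.
  intros. split; apply series_nonneg; intros; try apply Ee_nonneg; try apply Eo_nonneg; auto;
  try apply Ee_ex; try apply Eo_ex; auto.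
Qed.

Lemma eps_nonneg B C t N : 0 < B -> 0 < C ->
  0 <= Series (Ee B C t) - sum_n (Ee B C t) N /\ 0 <= Series (Eo B C t) - sum_n (Eo B C t) N.
Proof.
  intros. split; apply Rge_le, Rge_minus, Rle_ge; apply sum_le_series; intros;
  try apply Ee_nonneg; try apply Eo_nonneg; auto; try apply Ee_ex; try apply Eo_ex; auto.
Qed.

Lemma pt_diff B C j t N k : 0 < B -> 0 < C ->
  Rabs (ptN B C j t N k - pt B C j t k) <=
  (2 * Series (Ee B C t) * (Series (Ee B C t) - sum_n (Ee B C t) N) +
   2 * Series (Eo B C t) * (Series (Eo B C t) - sum_n (Eo B C t) N)) * (gam j k * gam j k).
Proof.
  intros HB HC. unfold ptN, pt.
  replace ((-1) ^ k * (uN B C j t N k ^ 2 + vN B C j t N k ^ 2) - (-1) ^ k * (psi_re B C j t k ^ 2 + psi_im B C j t k ^ 2))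
    with ((-1) ^ k * ((uN B C j t N k ^ 2 - psi_re B C j t k ^ 2) + (vN B C j t N k ^ 2 - psi_im B C j t k ^ 2))) by ring.
  rewrite Rabs_mult, abs_m1_pow, Rmult_1_l. eapply Rle_trans. apply Rabs_triang.
  pose proof (gam_pos j k) as Hg.
  pose proof (sq_diff (uN B C j t N k) (psi_re B C j t k)) as S1.
  pose proof (sq_diff (vN B C j t N k) (psi_im B C j t k)) as S2.
  pose proof (u_close B C j t N k HB HC). pose proof (v_close B C j t N k HB HC).
  pose proof (u_bnd B C j t k HB HC). pose proof (v_bnd B C j t k HB HC).
  pose proof (uN_bnd B C j t N k HB HC). pose proof (vN_bnd B C j t N k HB HC).
  destruct (eps_nonneg B C t N HB HC). destruct (SE_nonneg B C t HB HC).
  set (eE := Series (Ee B C t) - sum_n (Ee B C t) N) in *.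
  set (eO := Series (Eo B C t) - sum_n (Eo B C t) N) in *.
  set (sE := Series (Ee B C t)) in *. set (sO := Series (Eo B C t)) in *.
  set (g := gam j k) in *.
  rewrite Rabs_minus_sym in H, H0.
  apply Rle_trans with (Rabs (uN B C j t N k - psi_re B C j t k) * (Rabs (uN B C j t N k) + Rabs (psi_re B C j t k)) +
                        Rabs (vN B C j t N k - psi_im B C j t k) * (Rabs (vN B C j t N k) + Rabs (psi_im B C j t k))).
  apply Rplus_le_compat; auto.
  apply Rle_trans with ((g * eE) * (2 * (g * sE)) + (g * eO) * (2 * (g * sO))).
  apply Rplus_le_compat; apply Rmult_le_compat; try apply Rabs_pos; try lra;
    apply Rplus_le_le_0_compat; apply Rabs_pos.
  right; ring.
Qed.

Lemma sq_le_bnd a b : Rabs a <= b -> a ^ 2 <= b ^ 2.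
Proof. intros H. rewrite <- (pow2_abs a). pose proof (Rabs_pos a). apply pow_incr. lra. Qed.

Lemma pt_bound_gen (a b : R) k g sE sO : Rabs a <= g * sE -> Rabs b <= g * sO ->
  Rabs ((-1) ^ k * (a ^ 2 + b ^ 2)) <= (sE ^ 2 + sO ^ 2) * (g * g).
Proof.
  intros H1 H2. rewrite Rabs_mult, abs_m1_pow, Rmult_1_l.
  rewrite Rabs_pos_eq by (apply Rplus_le_le_0_compat; apply pow2_ge_0).
  apply sq_le_bnd in H1. apply sq_le_bnd in H2.
  replace ((sE ^ 2 + sO ^ 2) * (g * g)) with ((g * sE) ^ 2 + (g * sO) ^ 2) by ring. lra.
Qed.

Lemma pt_ex B C j t : 0 < B -> 0 < C -> ex_series (pt B C j t).
Proof.
  intros HB HC. destruct (SE_nonneg B C t HB HC).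
  apply (series_abs_bound _ (fun k => gam j k * gam j k) (Series (Ee B C t) ^ 2 + Series (Eo B C t) ^ 2)).
  apply Rplus_le_le_0_compat; apply pow2_ge_0.
  intros k. apply pt_bound_gen. apply u_bnd; auto. apply v_bnd; auto. apply g2_ex.
Qed.

Lemma ptN_ex B C j t N : 0 < B -> 0 < C -> ex_series (ptN B C j t N).
Proof.
  intros HB HC. destruct (SE_nonneg B C t HB HC).
  apply (series_abs_bound _ (fun k => gam j k * gam j k) (Series (Ee B C t) ^ 2 + Series (Eo B C t) ^ 2)).
  apply Rplus_le_le_0_compat; apply pow2_ge_0.
  intros k. apply pt_bound_gen. apply uN_bnd; auto. apply vN_bnd; auto. apply g2_ex.
Qed.

Lemma parity_lim B C j t : 0 < B -> 0 < C ->
  is_lim_seq (fun N => Series (ptN B C j t N)) (parity_expect B C j t).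
Proof.
  intros HB HC.
  assert (HP : parity_expect B C j t = Series (pt B C j t)) by reflexivity.
  set (cN := fun N => 2 * Series (Ee B C t) * (Series (Ee B C t) - sum_n (Ee B C t) N) +
                      2 * Series (Eo B C t) * (Series (Eo B C t) - sum_n (Eo B C t) N)).
  assert (Hc : is_lim_seq cN 0).
  { replace 0 with (2 * Series (Ee B C t) * 0 + 2 * Series (Eo B C t) * 0) by ring.
    apply is_lim_seq_plus'; apply (is_lim_seq_scal_l _ _ 0); apply tail_lim; [apply Ee_ex|apply Eo_ex]; auto. }
  assert (Hd : is_lim_seq (fun N => Series (ptN B C j t N) - parity_expect B C j t) 0).
  { apply is_lim_seq_abs_0.
    apply (is_lim_seq_le_le (fun _ => 0) _ (fun N => cN N * Series (fun k => gam j k * gam j k))).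
    - intros N. split. apply Rabs_pos. rewrite HP, <- Series_minus by (try apply ptN_ex; try apply pt_ex; auto).
      destruct (eps_nonneg B C t N HB HC). destruct (SE_nonneg B C t HB HC).
      apply series_abs_bound. unfold cN. apply Rplus_le_le_0_compat; apply Rmult_le_pos; lra.
      intros k. apply pt_diff; auto. apply g2_ex.
    - apply is_lim_seq_const.
    - replace (Finite 0) with (Rbar_mult 0 (Series (fun k => gam j k * gam j k))) by (simpl; f_equal; ring).
      apply (is_lim_seq_scal_r cN). auto. }
  pose proof (is_lim_seq_plus' _ _ 0 (parity_expect B C j t) Hd (is_lim_seq_const _)) as H.
  rewrite Rplus_0_l in H. eapply is_lim_seq_ext; [|exact H]. intros; simpl; ring.
Qed.

Lemma isRp (f g : R -> R) a b If Ig : is_RInt f a b If -> is_RInt g a b Ig -> is_RInt (fun x => f x + g x) a b (If + Ig).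
Proof. apply (is_RInt_plus (V:=R_NormedModule)). Qed.
Lemma isRs (f : R -> R) a b c If : is_RInt f a b If -> is_RInt (fun x => c * f x) a b (c * If).
Proof. apply (is_RInt_scal (V:=R_NormedModule)). Qed.
Lemma isRe (f g : R -> R) a b l : (forall x, f x = g x) -> is_RInt f a b l -> is_RInt g a b l.
Proof. intros H. apply (is_RInt_ext (V:=R_NormedModule)). intros; auto. Qed.

Lemma RIsc (f : R -> R) a b c : ex_RInt f a b -> RInt (fun x => c * f x) a b = c * RInt f a b.
Proof. intros H. apply RIu. apply isRs. apply RIc; auto. Qed.

Lemma RInt_sum (f : nat -> R -> R) K : (forall k, ex_RInt (f k) 0 PI) ->
  is_RInt (fun x => sum_n (fun k => f k x) K) 0 PI (sum_n (fun k => RInt (f k) 0 PI) K).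
Proof.
  intros H. induction K.
  - rewrite sum_O. apply (isRe (f 0%nat)). intros; rewrite sum_O; auto. apply RIc; auto.
  - rewrite sum_Sn. apply (isRe (fun x => sum_n (fun k => f k x) K + f (S K) x)).
    intros; rewrite sum_Sn; auto. apply isRp; auto. apply RIc; auto.
Qed.

Lemma ssum_mult_r (u : nat -> R) c n : sum_n (fun k => u k * c) n = sum_n u n * c.
Proof. rewrite <- (Rmult_comm c), <- ssum_scal. apply ssum_ext. intros; ring. Qed.

Lemma C1_sum (f : nat -> R -> R) K : (forall k, C1 (f k)) -> C1 (fun x => sum_n (fun k => f k x) K).
Proof.
  intros H. induction K.
  - apply (C1_ext (f 0%nat)). intros; rewrite sum_O; auto. auto.
  - apply (C1_ext (fun x => sum_n (fun k => f k x) K + f (S K) x)). intros; rewrite sum_Sn; auto.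
    apply C1_plus; auto.
Qed.

Lemma FP B C (a : nat -> R) K : 0 < B -> 0 < C -> Rabs (rr B C) < 1 ->
  sum_n (fun k => a k ^ 2) K =
  RInt (fun x => (sum_n (fun k => a k * q B C k x) K) ^ 2 * wt B C x) 0 PI.
Proof.
  intros HB HC Hr. set (F := fun x => sum_n (fun k => a k * q B C k x) K).
  assert (HF : C1 F). { apply C1_sum. intros; apply C1_scal, C1_q. }
  assert (Hw : C1 (wt B C)) by (apply wt_C1; auto).
  assert (Hin : forall k, (k <= K)%nat -> RInt (fun x => q B C k x * F x * wt B C x) 0 PI = a k).
  { intros k Hk. apply RIu.
    apply (isRe (fun x => sum_n (fun l => a l * (q B C k x * q B C l x * wt B C x)) K)).
    { intros x. transitivity (sum_n (fun l => (q B C k x * wt B C x) * (a l * q B C l x)) K).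
      apply ssum_ext; intros; ring. rewrite ssum_scal. unfold F. ring. }
    eapply isR_eq. apply RInt_sum.
    { intros l. apply exRc. intros z _. apply C1_cont. apply C1_scal. apply C1_mult; auto. apply C1_mult; apply C1_q. }
    rewrite <- (ssum_delta a k K Hk). apply ssum_ext. intros l _.
    rewrite RIsc. 2: apply G_ex; auto. fold (G B C k l). rewrite orth by auto.
    rewrite Nat.eqb_sym. destruct (l =? k); ring. }
  symmetry. apply RIu.
  apply (isRe (fun x => sum_n (fun k => a k * (q B C k x * F x * wt B C x)) K)).
  { intros x. transitivity (sum_n (fun k => (F x * wt B C x) * (a k * q B C k x)) K).
    apply ssum_ext; intros; ring. rewrite ssum_scal.
    change (sum_n (fun k => a k * q B C k x) K) with (F x). ring. }
  eapply isR_eq. apply RInt_sum.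
  { intros l. apply exRc. intros z _. apply C1_cont. apply C1_scal. apply C1_mult; auto. apply C1_mult; auto. apply C1_q. }
  apply ssum_ext. intros k Hk. rewrite RIsc. 2: { apply exRc. intros z _. apply C1_cont. apply C1_mult; auto. apply C1_mult; auto. apply C1_q. }
  rewrite Hin by auto. ring.
Qed.

Definition CeN (N : nat) (y : R) := sum_n (fun m => (-1) ^ m * y ^ (2 * m) / INR (fact (2 * m))) N.
Definition SeN (N : nat) (y : R) := sum_n (fun m => (-1) ^ m * y ^ (2 * m + 1) / INR (fact (2 * m + 1))) N.

Lemma uN_supp B C j t N k : (j + 2 * N + 1 < k)%nat -> uN B C j t N k = 0.
Proof.
  intros H. unfold uN. apply ssum_zero. intros m Hm. unfold ae. rewrite h_supp by lia. ring.
Qed.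
Lemma vN_supp B C j t N k : (j + 2 * N + 1 < k)%nat -> vN B C j t N k = 0.
Proof.
  intros H. unfold vN. rewrite ssum_zero. ring. intros m Hm. unfold ao. rewrite h_supp by lia. ring.
Qed.
Lemma uN_par B C j t N k : Nat.even (j + k) = false -> uN B C j t N k = 0.
Proof.
  intros H. unfold uN. apply ssum_zero. intros m Hm. unfold ae. rewrite h_par. ring.
  replace (j + 2 * m + k)%nat with ((j + k) + 2 * m)%nat by lia. rewrite Nat.even_add_mul_2. auto.
Qed.
Lemma vN_par B C j t N k : Nat.even (j + k) = true -> vN B C j t N k = 0.
Proof.
  intros H. unfold vN. rewrite ssum_zero. ring. intros m Hm. unfold ao. rewrite h_par. ring.
  replace (j + (2 * m + 1) + k)%nat with (S ((j + k) + 2 * m))%nat by lia.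
  rewrite Nat.even_succ, <- Nat.negb_even, Nat.even_add_mul_2, H. auto.
Qed.

Lemma m1_par j k : (-1) ^ k = if Nat.even (j + k) then (-1) ^ j else - (-1) ^ j.
Proof.
  assert (E : (-1) ^ k = (-1) ^ j * (-1) ^ (j + k)).
  { rewrite pow_add, <- Rmult_assoc, <- pow_add. replace (j + j)%nat with (2 * j)%nat by lia.
    rewrite pow_mult. replace ((-1) ^ 2) with 1 by ring. rewrite pow1. ring. }
  rewrite E. destruct (Nat.Even_or_Odd (j + k)) as [[p Hp]|[p Hp]]; rewrite Hp.
  - assert (P2 : (-1) ^ (2 * p) = 1) by (rewrite pow_mult; replace ((-1) ^ 2) with 1 by ring; apply pow1).
    replace (Nat.even (2 * p)) with true by (rewrite Nat.even_mul; reflexivity). rewrite P2. ring.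
  - assert (P2 : (-1) ^ (2 * p + 1) = -1) by (rewrite pow_add, pow_mult; replace ((-1) ^ 2) with 1 by ring; rewrite pow1; ring).
    replace (Nat.even (2 * p + 1)) with false.
    rewrite P2. ring. replace (2 * p + 1)%nat with (S (2 * p)) by lia. rewrite Nat.even_succ, Nat.odd_mul. reflexivity.
Qed.

Lemma ptN_eq B C j t N k : ptN B C j t N k = (-1) ^ j * (uN B C j t N k ^ 2 - vN B C j t N k ^ 2).
Proof.
  unfold ptN. rewrite (m1_par j k). destruct (Nat.even (j + k)) eqn:E.
  - rewrite (vN_par B C j t N k E). ring.
  - rewrite (uN_par B C j t N k E). ring.
Qed.

Lemma uN_pointwise B C j t N x : 0 < B -> 0 < C ->
  sum_n (fun k => uN B C j t N k * q B C k x) (j + 2 * N + 1) = CeN N (2 * B * t * cos x) * q B C j x.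
Proof.
  intros HB HC. unfold uN, CeN.
  transitivity (sum_n (fun k => sum_n (fun m => ae B C j t m k * q B C k x) N) (j + 2 * N + 1)).
  { apply ssum_ext. intros. rewrite Rmult_comm, <- ssum_scal. apply ssum_ext; intros; ring. }
  rewrite ssum_swap. rewrite <- ssum_mult_r. apply ssum_ext. intros m Hm.
  unfold ae. transitivity ((-1) ^ m * t ^ (2 * m) / INR (fact (2 * m)) *
     sum_n (fun k => Hpow_e B C j (2 * m) k * q B C k x) (j + 2 * N + 1)).
  { rewrite <- ssum_scal. apply ssum_ext; intros; ring. }
  rewrite pointwise by (lra || lia). rewrite !Rpow_mult_distr. field. apply Rgt_not_eq, fact_pos.
Qed.

Lemma vN_pointwise B C j t N x : 0 < B -> 0 < C ->
  sum_n (fun k => vN B C j t N k * q B C k x) (j + 2 * N + 1) = - (SeN N (2 * B * t * cos x) * q B C j x).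
Proof.
  intros HB HC. unfold vN, SeN.
  transitivity (- sum_n (fun k => sum_n (fun m => ao B C j t m k * q B C k x) N) (j + 2 * N + 1)).
  { transitivity (sum_n (fun k => (-1) * sum_n (fun m => ao B C j t m k * q B C k x) N) (j + 2 * N + 1)).
    apply ssum_ext; intros. rewrite ssum_mult_r. ring.
    rewrite ssum_scal. match goal with |- @eq _ ?a ?b => change (@eq R a b) end. ring. }
  rewrite ssum_swap. rewrite <- ssum_mult_r. f_equal. apply ssum_ext. intros m Hm.
  unfold ao. transitivity ((-1) ^ m * t ^ (2 * m + 1) / INR (fact (2 * m + 1)) *
     sum_n (fun k => Hpow_e B C j (2 * m + 1) k * q B C k x) (j + 2 * N + 1)).
  { rewrite <- ssum_scal. apply ssum_ext; intros; ring. }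
  rewrite pointwise by (lra || lia). rewrite !Rpow_mult_distr. field. apply Rgt_not_eq, fact_pos.
Qed.

Lemma ptN_series B C j t N : 0 < B -> 0 < C -> Rabs (rr B C) < 1 ->
  Series (ptN B C j t N) = (-1) ^ j *
    (RInt (fun x => (CeN N (2 * B * t * cos x) * q B C j x) ^ 2 * wt B C x) 0 PI -
     RInt (fun x => (SeN N (2 * B * t * cos x) * q B C j x) ^ 2 * wt B C x) 0 PI).
Proof.
  intros HB HC Hr. rewrite (series_fin _ (j + 2 * N + 1)).
  2: { intros k Hk. unfold ptN. rewrite uN_supp, vN_supp by lia. ring. }
  rewrite (ssum_ext _ (fun k => (-1) ^ j * (uN B C j t N k ^ 2 - vN B C j t N k ^ 2))) by (intros; apply ptN_eq).
  rewrite ssum_scal, ssum_minus. f_equal. rewrite !(FP B C) by auto. f_equal.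
  - apply RIe. intros x _. rewrite uN_pointwise; auto.
  - apply RIe. intros x _. rewrite vN_pointwise; auto. ring.
Qed.

Lemma cos_series y : is_series (fun m => (-1) ^ m * y ^ (2 * m) / INR (fact (2 * m))) (cos y).
Proof.
  unfold cos. destruct (exist_cos (Rsqr y)) as [a Ha]. unfold cos_in in Ha.
  apply is_series_Reals in Ha. eapply is_series_ext; [|exact Ha].
  intros n. toR. unfold cos_n. rewrite pow_mult. unfold Rsqr. replace (y ^ 2) with (y * y) by ring. unfold Rdiv. change (mult y ?z) with (y * z). ring.
Qed.

Lemma sin_series y : is_series (fun m => (-1) ^ m * y ^ (2 * m + 1) / INR (fact (2 * m + 1))) (sin y).
Proof.
  unfold sin. destruct (exist_sin (Rsqr y)) as [a Ha]. unfold sin_in in Ha.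
  apply is_series_Reals in Ha. apply (is_series_scal_l (K:=R_AbsRing) (V:=R_NormedModule) y) in Ha.
  eapply is_series_ext; [|exact Ha].
  intros n. toR. unfold sin_n. unfold scal, mult; simpl. replace (n + (n + 0) + 1)%nat with (2 * n + 1)%nat by lia. rewrite pow_add, pow_mult. unfold Rsqr. replace (y ^ 2) with (y * y) by ring. unfold Rdiv. change (mult y ?z) with (y * z). ring.
Qed.

Lemma cos_close B C t N y : 0 < B -> 0 < C -> Rabs y <= Xv B C t ->
  Rabs (cos y - CeN N y) <= Series (Ee B C t) - sum_n (Ee B C t) N.
Proof.
  intros HB HC Hy. rewrite <- (is_series_unique _ _ (cos_series y)). unfold CeN.
  rewrite <- (Rmult_1_l (Series (Ee B C t) - _)). apply tail_bound. lra.
  2: apply Ee_ex; auto. intros m. rewrite Rmult_1_l. unfold Ee.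
  unfold Rdiv. rewrite !Rabs_mult, abs_m1_pow, Rmult_1_l, Rabs_inv, (Rabs_pos_eq (INR _)) by (left; apply fact_pos).
  apply Rmult_le_compat_r. left; apply Rinv_0_lt_compat, fact_pos.
  rewrite <- RPow_abs. apply pow_incr. split; auto. apply Rabs_pos.
Qed.

Lemma sin_close B C t N y : 0 < B -> 0 < C -> Rabs y <= Xv B C t ->
  Rabs (sin y - SeN N y) <= Series (Eo B C t) - sum_n (Eo B C t) N.
Proof.
  intros HB HC Hy. rewrite <- (is_series_unique _ _ (sin_series y)). unfold SeN.
  rewrite <- (Rmult_1_l (Series (Eo B C t) - _)). apply tail_bound. lra.
  2: apply Eo_ex; auto. intros m. rewrite Rmult_1_l. unfold Eo.
  unfold Rdiv. rewrite !Rabs_mult, abs_m1_pow, Rmult_1_l, Rabs_inv, (Rabs_pos_eq (INR _)) by (left; apply fact_pos).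
  apply Rmult_le_compat_r. left; apply Rinv_0_lt_compat, fact_pos.
  rewrite <- RPow_abs. apply pow_incr. split; auto. apply Rabs_pos.
Qed.

Lemma CeN_bnd B C t N y : 0 < B -> 0 < C -> Rabs y <= Xv B C t -> Rabs (CeN N y) <= Series (Ee B C t).
Proof.
  intros HB HC Hy. unfold CeN. rewrite <- (Rmult_1_l (Series _)). eapply Rle_trans. apply (sum_abs_bound _ (Ee B C t)).
  2: { apply Rmult_le_compat_l. lra. apply sum_le_series. intros; apply Ee_nonneg; auto. apply Ee_ex; auto. }
  intros m. rewrite Rmult_1_l. unfold Ee.
  unfold Rdiv. rewrite !Rabs_mult, abs_m1_pow, Rmult_1_l, Rabs_inv, (Rabs_pos_eq (INR _)) by (left; apply fact_pos).
  apply Rmult_le_compat_r. left; apply Rinv_0_lt_compat, fact_pos.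
  rewrite <- RPow_abs. apply pow_incr. split; auto. apply Rabs_pos.
Qed.

Lemma SeN_bnd B C t N y : 0 < B -> 0 < C -> Rabs y <= Xv B C t -> Rabs (SeN N y) <= Series (Eo B C t).
Proof.
  intros HB HC Hy. unfold SeN. rewrite <- (Rmult_1_l (Series _)). eapply Rle_trans. apply (sum_abs_bound _ (Eo B C t)).
  2: { apply Rmult_le_compat_l. lra. apply sum_le_series. intros; apply Eo_nonneg; auto. apply Eo_ex; auto. }
  intros m. rewrite Rmult_1_l. unfold Eo.
  unfold Rdiv. rewrite !Rabs_mult, abs_m1_pow, Rmult_1_l, Rabs_inv, (Rabs_pos_eq (INR _)) by (left; apply fact_pos).
  apply Rmult_le_compat_r. left; apply Rinv_0_lt_compat, fact_pos.
  rewrite <- RPow_abs. apply pow_incr. split; auto. apply Rabs_pos.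
Qed.

Definition dN B C t N := (Series (Ee B C t) - sum_n (Ee B C t) N) * (Series (Ee B C t) + 1) +
                         (Series (Eo B C t) - sum_n (Eo B C t) N) * (Series (Eo B C t) + 1).

Lemma abs_sub_le a b : Rabs (a - b) <= Rabs a + Rabs b.
Proof. unfold Rminus. eapply Rle_trans. apply Rabs_triang. rewrite Rabs_Ropp. lra. Qed.

Lemma pw_close B C t N y : 0 < B -> 0 < C -> Rabs y <= Xv B C t ->
  Rabs ((CeN N y ^ 2 - SeN N y ^ 2) - cos (2 * y)) <= dN B C t N.
Proof.
  intros HB HC Hy. rewrite cos_2a.
  replace (CeN N y ^ 2 - SeN N y ^ 2 - (cos y * cos y - sin y * sin y))
    with ((CeN N y ^ 2 - cos y ^ 2) - (SeN N y ^ 2 - sin y ^ 2)) by ring.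
  eapply Rle_trans. apply abs_sub_le. unfold dN.
  pose proof (sq_diff (CeN N y) (cos y)) as S1. pose proof (sq_diff (SeN N y) (sin y)) as S2.
  pose proof (cos_close B C t N y HB HC Hy) as H1. pose proof (sin_close B C t N y HB HC Hy) as H2.
  rewrite Rabs_minus_sym in H1, H2.
  pose proof (CeN_bnd B C t N y HB HC Hy). pose proof (SeN_bnd B C t N y HB HC Hy).
  assert (Rabs (cos y) <= 1) by (apply Rabs_le; apply COS_bound).
  assert (Rabs (sin y) <= 1) by (apply Rabs_le; apply SIN_bound).
  apply Rplus_le_compat.
  - eapply Rle_trans. apply S1. apply Rmult_le_compat; try apply Rabs_pos; auto.
    apply Rplus_le_le_0_compat; apply Rabs_pos. lra.
  - eapply Rle_trans. apply S2. apply Rmult_le_compat; try apply Rabs_pos; auto.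
    apply Rplus_le_le_0_compat; apply Rabs_pos. lra.
Qed.

Lemma dN_lim B C t : 0 < B -> 0 < C -> is_lim_seq (dN B C t) 0.
Proof.
  intros HB HC. unfold dN.
  replace 0 with (0 * (Series (Ee B C t) + 1) + 0 * (Series (Eo B C t) + 1)) by ring.
  apply is_lim_seq_plus'; apply is_lim_seq_mult'; try apply is_lim_seq_const; apply tail_lim;
  [apply Ee_ex|apply Eo_ex]; auto.
Qed.

Lemma C1_pow n : C1 (fun y => y ^ n).
Proof.
  induction n. apply (C1_ext (fun _ => 1)). intros; simpl; auto. apply C1_const.
  apply (C1_ext (fun y => y * y ^ n)). intros; simpl; auto. apply C1_mult; auto. apply C1_id.
Qed.
Lemma C1_CeN N : C1 (CeN N).
Proof.
  unfold CeN. apply (C1_sum (fun m y => (-1) ^ m * y ^ (2 * m) / INR (fact (2 * m)))).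
  intros m. apply (C1_ext (fun y => ((-1) ^ m / INR (fact (2 * m))) * y ^ (2 * m))). intros; unfold Rdiv; ring.
  apply C1_scal, C1_pow.
Qed.
Lemma C1_SeN N : C1 (SeN N).
Proof.
  unfold SeN. apply (C1_sum (fun m y => (-1) ^ m * y ^ (2 * m + 1) / INR (fact (2 * m + 1)))).
  intros m. apply (C1_ext (fun y => ((-1) ^ m / INR (fact (2 * m + 1))) * y ^ (2 * m + 1))). intros; unfold Rdiv; ring.
  apply C1_scal, C1_pow.
Qed.

Definition tau B t x := 2 * B * t * cos x.
Lemma C1_tau B t : C1 (tau B t).
Proof. unfold tau. apply C1_scal, C1_cos. Qed.
Lemma tau_bnd B C t x : 0 < B -> 0 < C -> Rabs (tau B t x) <= Xv B C t.
Proof.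
  intros HB HC. unfold tau, Xv, Dc. rewrite !Rabs_mult, (Rabs_pos_eq 2), (Rabs_pos_eq B) by lra.
  assert (Rabs (cos x) <= 1) by (apply Rabs_le; apply COS_bound).
  pose proof (Rabs_pos t). pose proof (Rabs_pos (cos x)).
  assert (2 * B * Rabs t * Rabs (cos x) <= 2 * B * Rabs t * 1).
  { apply Rmult_le_compat_l; auto. apply Rmult_le_pos; lra. }
  nra.
Qed.

Definition IN B C j t N := RInt (fun x => (CeN N (tau B t x) * q B C j x) ^ 2 * wt B C x) 0 PI -
                           RInt (fun x => (SeN N (tau B t x) * q B C j x) ^ 2 * wt B C x) 0 PI.
Definition Ilim B C j t := RInt (fun x => cos (2 * tau B t x) * (q B C j x ^ 2 * wt B C x)) 0 PI.

Lemma isRm (f g : R -> R) a b If Ig : is_RInt f a b If -> is_RInt g a b Ig -> is_RInt (fun x => f x - g x) a b (If - Ig).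
Proof. apply (is_RInt_minus (V:=R_NormedModule)). Qed.

Lemma nRle (f g : R -> R) a b lf lg : a <= b -> (forall x, a <= x <= b -> Rabs (f x) <= g x) ->
  is_RInt f a b lf -> is_RInt g a b lg -> Rabs lf <= lg.
Proof. intros. apply (norm_RInt_le (V:=R_NormedModule) f g a b lf lg); auto. Qed.

Lemma IN_close B C j t N : 0 < B -> 0 < C -> Rabs (rr B C) < 1 ->
  Rabs (IN B C j t N - Ilim B C j t) <= dN B C t N.
Proof.
  intros HB HC Hr.
  assert (Hw : C1 (wt B C)) by (apply wt_C1; auto).
  set (w := fun x => q B C j x ^ 2 * wt B C x).
  assert (Hw2 : C1 w). { unfold w. apply C1_mult; auto. apply (C1_comp (q B C j) (fun y => y ^ 2)). apply C1_q. apply C1_pow. }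
  assert (Hwp : forall x, 0 <= w x).
  { intros x. unfold w, wt. apply Rmult_le_pos. apply pow2_ge_0. pose proof (den_gt0 (rr B C) x Hr).
    unfold cc. apply Rdiv_le_0_compat; [|lra]. apply Rdiv_le_0_compat. apply Rmult_le_pos. lra.
    apply Rdiv_le_0_compat. apply pow2_ge_0. apply pow_lt; lra. apply PI_RGT_0. }
  assert (Hce : C1 (fun x => CeN N (tau B t x))) by (apply C1_comp; [apply C1_tau|apply C1_CeN]).
  assert (Hse : C1 (fun x => SeN N (tau B t x))) by (apply C1_comp; [apply C1_tau|apply C1_SeN]).
  assert (E1 : ex_RInt (fun x => (CeN N (tau B t x) * q B C j x) ^ 2 * wt B C x) 0 PI).
  { apply exRc. intros z _. apply C1_cont. apply C1_mult; auto.
    apply (C1_comp (fun x => CeN N (tau B t x) * q B C j x) (fun y => y ^ 2)). apply C1_mult; auto. apply C1_q. apply C1_pow. }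
  assert (E2 : ex_RInt (fun x => (SeN N (tau B t x) * q B C j x) ^ 2 * wt B C x) 0 PI).
  { apply exRc. intros z _. apply C1_cont. apply C1_mult; auto.
    apply (C1_comp (fun x => SeN N (tau B t x) * q B C j x) (fun y => y ^ 2)). apply C1_mult; auto. apply C1_q. apply C1_pow. }
  assert (E3 : ex_RInt (fun x => cos (2 * tau B t x) * w x) 0 PI).
  { apply exRc. intros z _. apply C1_cont. apply C1_mult; auto.
    apply (C1_comp (fun x => 2 * tau B t x) cos). apply C1_scal, C1_tau. apply C1_cos. }
  assert (E4 : ex_RInt w 0 PI) by (apply exRc; intros z _; apply C1_cont; auto).
  unfold IN, Ilim. fold w.
  apply (nRle (fun x => ((CeN N (tau B t x) * q B C j x) ^ 2 * wt B C x - (SeN N (tau B t x) * q B C j x) ^ 2 * wt B C x)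
                         - cos (2 * tau B t x) * w x) (fun x => dN B C t N * w x) 0 PI).
  - left; apply PI_RGT_0.
  - intros x _.
    replace ((CeN N (tau B t x) * q B C j x) ^ 2 * wt B C x - (SeN N (tau B t x) * q B C j x) ^ 2 * wt B C x - cos (2 * tau B t x) * w x)
      with (((CeN N (tau B t x) ^ 2 - SeN N (tau B t x) ^ 2) - cos (2 * tau B t x)) * w x) by (unfold w; ring).
    rewrite Rabs_mult, (Rabs_pos_eq (w x)) by auto. apply Rmult_le_compat_r; auto.
    apply pw_close; auto. apply tau_bnd; auto.
  - apply isRm. apply isRm; apply RIc; auto. apply RIc; auto.
  - eapply isR_eq. apply isRs. apply RIc; auto. 
    replace (RInt w 0 PI) with (G B C j j). rewrite orth, Nat.eqb_refl by auto. toR. ring.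
    apply RIe. intros; unfold w; ring.
Qed.

Lemma IN_lim B C j t : 0 < B -> 0 < C -> Rabs (rr B C) < 1 -> is_lim_seq (IN B C j t) (Ilim B C j t).
Proof.
  intros HB HC Hr.
  assert (H : is_lim_seq (fun N => IN B C j t N - Ilim B C j t) 0).
  { apply is_lim_seq_abs_0. apply (is_lim_seq_le_le (fun _ => 0) _ (dN B C t)).
    intros N; split. apply Rabs_pos. apply IN_close; auto.
    apply is_lim_seq_const. apply dN_lim; auto. }
  pose proof (is_lim_seq_plus' _ _ 0 (Ilim B C j t) H (is_lim_seq_const _)) as H2.
  rewrite Rplus_0_l in H2. eapply is_lim_seq_ext; [|exact H2]. intros; simpl; ring.
Qed.

Lemma parity_formula B C j t : 0 < B -> 0 < C -> Rabs (rr B C) < 1 ->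
  parity_expect B C j t = (-1) ^ j * Ilim B C j t.
Proof.
  intros HB HC Hr.
  pose proof (parity_lim B C j t HB HC) as H1.
  assert (H2 : is_lim_seq (fun N => Series (ptN B C j t N)) ((-1) ^ j * Ilim B C j t)).
  { eapply is_lim_seq_ext. intros N. symmetry. rewrite ptN_series by auto. reflexivity.
    apply (is_lim_seq_scal_l _ ((-1) ^ j) (Ilim B C j t)). apply IN_lim; auto. }
  apply is_lim_seq_unique in H1. apply is_lim_seq_unique in H2. rewrite H1 in H2. injection H2; auto.
Qed.

Lemma abs_le_sq1 a : Rabs a <= a ^ 2 + 1.
Proof. rewrite <- (pow2_abs a). pose proof (Rabs_pos a). nra. Qed.

Lemma RL_bound (psi dpsi : R -> R) (Hd : forall x, is_derive psi x (dpsi x)) (Hc : forall x, continuous dpsi x) :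
  exists M, forall l, 0 < l ->
    Rabs (RInt (fun x => cos (l * cos x) * sin x * psi x) 0 PI) <= M / l.
Proof.
  assert (Hpsi : C1 psi) by (exists dpsi; auto).
  set (M1 := RInt (fun x => dpsi x ^ 2 + 1) 0 PI).
  exists (M1 + Rabs (psi PI) + Rabs (psi 0)). intros l Hl.
  assert (Hsl : C1 (fun x => sin (l * cos x))) by (apply (C1_comp (fun x => l * cos x)); [apply C1_scal, C1_cos|apply C1_sin]).
  assert (Hcl : C1 (fun x => cos (l * cos x))) by (apply (C1_comp (fun x => l * cos x)); [apply C1_scal, C1_cos|apply C1_cos]).
  set (h := fun x => cos (l * cos x) * sin x * psi x).
  set (k := fun x => sin (l * cos x) * dpsi x).
  assert (Eh : ex_RInt h 0 PI).
  { apply exRc; intros z _; apply C1_cont. unfold h. apply C1_mult; auto. apply C1_mult; auto. apply C1_sin. }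
  assert (Ek : ex_RInt k 0 PI).
  { apply exRc; intros z _. unfold k. apply cR_mult; auto. apply C1_cont; auto. }
  assert (Hrel0 : is_RInt (fun x => (- l) * h x + k x) 0 PI (sin (l * cos PI) * psi PI - sin (l * cos 0) * psi 0)).
  { apply (isRe (fun x => (l * - sin x * cos (l * cos x)) * psi x + sin (l * cos x) * dpsi x)).
    { intros x. unfold h, k. ring. }
    eapply isR_eq. apply (is_RInt_derive (fun x => sin (l * cos x) * psi x)).
    - intros x _. apply (dR_mult (fun x => sin (l * cos x)) psi); auto.
      apply (dR_comp (fun x => l * cos x) sin). apply is_derive_sin.
      apply is_derive_scal, is_derive_cos.
    - intros x _. apply cR_plus.
      + apply cR_mult; [|apply C1_cont; auto]. apply C1_cont. apply C1_mult; auto.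
        apply (C1_ext (fun y => (- l) * sin y)). intros; ring. apply C1_scal, C1_sin.
      + apply cR_mult; auto. apply C1_cont; auto.
    - unfold minus, plus, opp; simpl. ring. }
  assert (Hrel1 : is_RInt (fun x => (- l) * h x + k x) 0 PI ((- l) * RInt h 0 PI + RInt k 0 PI)).
  { apply isRp. apply isRs. apply RIc; auto. apply RIc; auto. }
  assert (Hrel : (- l) * RInt h 0 PI + RInt k 0 PI = sin (l * cos PI) * psi PI - sin (l * cos 0) * psi 0).
  { apply RIu in Hrel0. apply RIu in Hrel1. rewrite <- Hrel0, <- Hrel1. reflexivity. }
  assert (HJ : Rabs (RInt k 0 PI) <= M1).
  { apply (nRle k (fun x => dpsi x ^ 2 + 1) 0 PI). left; apply PI_RGT_0.
    intros x _. unfold k. rewrite Rabs_mult. eapply Rle_trans; [|apply abs_le_sq1].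
    rewrite <- (Rmult_1_l (Rabs (dpsi x))) at 2. apply Rmult_le_compat_r. apply Rabs_pos.
    apply Rabs_le, SIN_bound. apply RIc; auto.
    apply RIc. apply exRc. intros z _. apply cR_plus. apply cR_mult; auto. apply cR_mult; auto. apply cR_const. apply cR_const. }
  assert (Hs1 : forall a b, Rabs (sin a * b) <= Rabs b).
  { intros a b. rewrite Rabs_mult. rewrite <- (Rmult_1_l (Rabs b)) at 2. apply Rmult_le_compat_r. apply Rabs_pos.
    apply Rabs_le, SIN_bound. }
  assert (Hlh : Rabs (l * RInt h 0 PI) <= M1 + Rabs (psi PI) + Rabs (psi 0)).
  { replace (l * RInt h 0 PI) with (RInt k 0 PI - (sin (l * cos PI) * psi PI - sin (l * cos 0) * psi 0)) by lra.
    eapply Rle_trans. apply abs_sub_le. eapply Rle_trans. apply Rplus_le_compat. apply HJ. apply abs_sub_le.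
    pose proof (Hs1 (l * cos PI) (psi PI)). pose proof (Hs1 (l * cos 0) (psi 0)). lra. }
  rewrite Rabs_mult, (Rabs_pos_eq l) in Hlh by lra.
  apply (Rmult_le_reg_l l); auto.
  replace (l * ((M1 + Rabs (psi PI) + Rabs (psi 0)) / l)) with (M1 + Rabs (psi PI) + Rabs (psi 0)) by (field; lra).
  exact Hlh.
Qed.

Lemma RL (psi : R -> R) : C1 psi ->
  is_lim (fun l => RInt (fun x => cos (l * cos x) * sin x * psi x) 0 PI) p_infty 0.
Proof.
  intros [dpsi [Hd Hc]]. destruct (RL_bound psi dpsi Hd Hc) as [M HM].
  assert (Hinv : is_lim (fun l => M * / l) p_infty 0).
  { replace (Finite 0) with (Rbar_mult M (Rbar_inv p_infty)) by (simpl; f_equal; ring).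
    apply is_lim_scal_l. apply is_lim_inv. apply is_lim_id. discriminate. }
  apply (is_lim_le_le_loc (fun l => - (M * / l)) (fun l => M * / l)).
  - exists 0. intros l Hl. pose proof (HM l Hl). unfold Rdiv in H. apply Rabs_le_between in H. lra.
  - replace (Finite 0) with (Rbar_opp 0) by (simpl; f_equal; ring). apply is_lim_opp. auto.
  - auto.
Qed.

Lemma Rbar_mult_pinf a : 0 < a -> Rbar_mult a p_infty = p_infty.
Proof.
  intros H. simpl. destruct (Rle_dec 0 a) as [H0|H0]; [|lra].
  destruct (Rle_lt_or_eq_dec 0 a H0); simpl; auto. lra.
Qed.

Theorem theorem2 (B C : R) (j : nat)
  (hB : 0 < B) (hC0 : 0 < C) (hC1 : C < sqrt 2 * B) :
  is_lim (fun t => parity_expect B C j t) p_infty 0.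
Proof.
  pose proof (rr_bound B C hB hC0 hC1) as Hr.
  pose (psi := fun x => sin x * (pol B C j (2 * B * cos x) ^ 2 * wt B C x)).
  assert (Hpsi : C1 psi).
  { unfold psi. apply C1_mult. apply C1_sin. apply C1_mult. 2: apply wt_C1; auto.
    apply (C1_comp (fun x => pol B C j (2 * B * cos x)) (fun y => y ^ 2)).
    apply (C1_comp (fun x => 2 * B * cos x)). apply C1_scal, C1_cos. apply (proj1 (C1_pol B C j)). apply C1_pow. }
  pose (I := fun l => RInt (fun x => cos (l * cos x) * sin x * psi x) 0 PI).
  assert (Heq : forall t, parity_expect B C j t = (-1) ^ j * I (4 * B * t)).
  { intros t. rewrite parity_formula by auto. f_equal. unfold Ilim, I. apply RIe. intros x _.
    unfold tau, psi, q. replace (2 * (2 * B * t * cos x)) with (4 * B * t * cos x) by ring. ring. }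
  apply (is_lim_ext (fun t => (-1) ^ j * I (4 * B * t))). intros y; symmetry; apply Heq.
  replace (Finite 0) with (Rbar_mult ((-1) ^ j) 0) by (simpl; f_equal; ring).
  apply is_lim_scal_l.
  apply (is_lim_comp I (fun t => 4 * B * t) p_infty 0 p_infty).
  - apply RL; auto.
  - pose proof (is_lim_scal_l (fun t => t) (4 * B) p_infty p_infty (is_lim_id _)) as H. rewrite Rbar_mult_pinf in H by lra. exact H.
  - exists 0. intros; discriminate.
Qed.
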